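(* Let $(a_n)_{n\ge0}$ be nonzero complex numbers with $|a_0|\ge|a_1|\ge\cdots$ and $\sum_n|a_n|^2<\infty$, and let $T$ be the weighted shift $Te_n=a_ne_{n+1}$. Let $S\in\mathcal A_T$ and $k>1$ be such that $\hat S(j)=0$ for $j=1,\dots,k-1$ and $\hat S(k)\ne0$. Then $\langle S\rangle=\langle T^k\rangle$ if and only if the basis vector $e_k$ belongs to the closed linear span of $\{T^mSe_0: m\ge0\}$.
   Context: $H$ is a complex Hilbert space with orthonormal basis $\{e_n\}_{n\ge0}$, $Te_n=a_ne_{n+1}$, and $\mathcal A_T$ is the operator-norm closure of the polynomials $p(T)$ with $p(0)=0$. For $R\in\mathcal A_T$, $\langle R\rangle$ is the smallest closed ideal of $\mathcal A_T$ containing $R$. For $\lambda$ in the unit circle $\mathbb T$ let $W_\lambda e_n=\lambda^ne_n$ and $\gamma_\lambda(S)=W_\lambda SW_\lambda^*$ (a norm-continuous action of $\mathbb T$ on $\mathcal A_T$ by isometric automorphisms with $\gamma_\lambda(T)=\lambda T$). For $S\in\mathcal A_T$, $j\ge1$, $\hat S(j)\in\mathbb C$ is defined by $\int_{\mathbb T}\gamma_\lambda(S)\lambda^{-j}\,dm(\lambda)=\hat S(j)T^j$ ($dm$ normalized Haar measure). *)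

(* Defs.v *)
From Stdlib Require Import Reals.
From Coquelicot Require Import Coquelicot.
Open Scope R_scope.

(* The Hilbert space H with orthonormal basis (e_n) is modelled as l^2(N;C):
   vectors are complex sequences, e_n is the n-th unit sequence. *)
Definition vec := nat -> C.
Definition op := vec -> vec.

Definition basis (k : nat) : vec := fun n => if Nat.eqb n k then 1%C else 0%C.

Definition l2 (x : vec) : Prop := ex_series (fun n => (Cmod (x n)) ^ 2).
Definition hnorm (x : vec) : R := sqrt (Series (fun n => (Cmod (x n)) ^ 2)).

(* ||v|| <= r  (stated via partial sums, so it also forces v to be in l^2) *)
Definition norm_le (v : vec) (r : R) : Prop :=
  0 <= r /\ forall N, sum_f_R0 (fun n => (Cmod (v n)) ^ 2) N <= r ^ 2.

Definition vsub (x y : vec) : vec := fun n => Cminus (x n) (y n).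

Definition op_close (A B : op) (e : R) : Prop :=
  forall x, l2 x -> norm_le (vsub (A x) (B x)) (e * hnorm x).

Definition op_add (A B : op) : op := fun x n => Cplus (A x n) (B x n).
Definition op_scal (c : C) (A : op) : op := fun x n => Cmult c (A x n).
Definition op_comp (A B : op) : op := fun x => A (B x).
Definition op_zero : op := fun _ _ => 0%C.

(* weighted shift T e_n = a_n e_{n+1} *)
Definition wshift (a : nat -> C) : op :=
  fun x n => match n with O => 0%C | S m => Cmult (a m) (x m) end.

Definition op_pow (A : op) (i : nat) : op := fun x => Nat.iter i A x.

(* p(T) with p(0) = 0:  sum_{i=0}^{d} c_i T^{i+1} *)
Definition poly_op (a : nat -> C) (c : nat -> C) (d : nat) : op :=
  fun x n => sum_n (fun i => Cmult (c i) (op_pow (wshift a) (S i) x n)) d.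

Definition inAT (a : nat -> C) (S : op) : Prop :=
  forall e, 0 < e -> exists (c : nat -> C) (d : nat), op_close S (poly_op a c d) e.

Definition closed_ideal (a : nat -> C) (I : op -> Prop) : Prop :=
  (forall X, I X -> inAT a X) /\
  I op_zero /\
  (forall X Y, I X -> I Y -> I (op_add X Y)) /\
  (forall c X, I X -> I (op_scal c X)) /\
  (forall A X, inAT a A -> I X -> I (op_comp A X) /\ I (op_comp X A)) /\
  (forall X, (forall e, 0 < e -> exists Y, I Y /\ op_close X Y e) -> I X).

Definition gen_ideal (a : nat -> C) (R0 : op) : op -> Prop :=
  fun X => forall I, closed_ideal a I -> I R0 -> I X.

(* \hat S(j): the defining identity  int gamma_lambda(S) lambda^{-j} dm = \hat S(j) T^j
   read off at the matrix entry <. e_0, e_j>, where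
   <int gamma_lambda(S) lambda^{-j} dm e_0, e_j> = <S e_0, e_j>. *)
Definition Shat (a : nat -> C) (S : op) (j : nat) : C :=
  Cdiv (S (basis 0) j) (op_pow (wshift a) j (basis 0) j).

Definition in_closed_span_orbit (a : nat -> C) (S : op) (k : nat) : Prop :=
  forall e, 0 < e -> exists (c : nat -> C) (d : nat),
    norm_le (vsub (basis k)
              (fun n => sum_n (fun m => Cmult (c m) (op_pow (wshift a) m (S (basis 0)) n)) d)) e.

(* Main.v *)
Require Import Defs.
From Stdlib Require Import Reals Lra Lia FunctionalExtensionality.
From Coquelicot Require Import Coquelicot.
Open Scope R_scope.

Ltac toC := match goal with |- @eq _ ?x ?y => change (@eq C x y) end.
Ltac cring := toC; ring.
Lemma csum_O (f : nat -> C) : sum_n f 0 = f 0%nat.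
Proof. exact (@sum_O C_AbelianMonoid f). Qed.
Lemma csum_S (f : nat -> C) d : sum_n f (S d) = Cplus (sum_n f d) (f (S d)).
Proof. exact (@sum_Sn C_AbelianMonoid f d). Qed.
Opaque sum_n.
Lemma csum_shift (f : nat -> C) d :
  sum_n f (S d) = Cplus (f 0%nat) (sum_n (fun i => f (S i)) d).
Proof.
  induction d.
  - rewrite csum_S, !csum_O. reflexivity.
  - rewrite (csum_S f (S d)), IHd, (csum_S (fun i => f (S i)) d). cring.
Qed.
Lemma csum_ext (f g : nat -> C) d : (forall i, (i <= d)%nat -> f i = g i) ->
  sum_n f d = sum_n g d.
Proof. exact (@sum_n_ext_loc C_AbelianMonoid f g d). Qed.
Lemma csum_plus (f g : nat -> C) d :
  sum_n (fun i => Cplus (f i) (g i)) d = Cplus (sum_n f d) (sum_n g d).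
Proof. exact (@sum_n_plus C_AbelianMonoid f g d). Qed.
Lemma csum_mult_l (c : C) (f : nat -> C) d :
  sum_n (fun i => Cmult c (f i)) d = Cmult c (sum_n f d).
Proof. exact (@sum_n_mult_l C_Ring c f d). Qed.
Lemma csum_zero d : sum_n (fun _ : nat => (0:C)) d = (0:C).
Proof. induction d. rewrite csum_O; auto. rewrite csum_S, IHd. cring. Qed.
Lemma csum_zero' (f : nat -> C) d : (forall i, (i <= d)%nat -> f i = (0:C)) -> sum_n f d = (0:C).
Proof. intros H. rewrite (csum_ext f (fun _ => (0:C))); auto. apply csum_zero. Qed.
Lemma csum_pad (f : nat -> C) d D : (d <= D)%nat ->
  sum_n (fun i => if Nat.leb i d then f i else (0:C)) D = sum_n f d.
Proof.
  intros H. induction H.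
  - apply csum_ext. intros i Hi. apply Nat.leb_le in Hi. rewrite Hi. auto.
  - rewrite csum_S, IHle. replace (Nat.leb (S m) d) with false. cring.
    symmetry. apply Nat.leb_gt. lia.
Qed.
Lemma csum_pad' (f : nat -> C) d D (g : nat -> C) : (d <= D)%nat ->
  (forall i, g i = if Nat.leb i d then f i else 0) -> sum_n g D = sum_n f d.
Proof. intros H1 H2. rewrite <- (csum_pad f d D H1). apply csum_ext. intros; apply H2. Qed.
Lemma csum_single (f : nat -> C) d j : (j <= d)%nat ->
  (forall i, (i <= d)%nat -> i <> j -> f i = (0:C)) -> sum_n f d = f j.
Proof.
  intros Hj H. induction d.
  - assert (j = 0%nat) by lia. subst. apply csum_O.
  - destruct (Nat.eq_dec j (S d)).
    + subst. rewrite csum_S, csum_zero'. cring. intros; apply H; lia.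
    + rewrite csum_S, IHd by (auto; lia). rewrite (H (S d)) by lia. cring.
Qed.
Lemma csum_Cmod (f : nat -> C) d : Cmod (sum_n f d) <= sum_f_R0 (fun i => Cmod (f i)) d.
Proof.
  induction d.
  - rewrite csum_O. simpl. lra.
  - rewrite csum_S. simpl. eapply Rle_trans. apply Cmod_triangle. lra.
Qed.

Definition ps (v : vec) (N : nat) := sum_f_R0 (fun n => (Cmod (v n)) ^ 2) N.

Lemma sumR_S f N : sum_f_R0 f (S N) = sum_f_R0 f N + f (S N).
Proof. reflexivity. Qed.
Lemma sumR_O f : sum_f_R0 f 0 = f 0%nat.
Proof. reflexivity. Qed.
Lemma sumR_scal c f N : sum_f_R0 (fun i => c * f i) N = c * sum_f_R0 f N.
Proof. induction N. reflexivity. rewrite !sumR_S, IHN. ring. Qed.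
Lemma sumR_scal_r c f N : sum_f_R0 (fun i => f i * c) N = sum_f_R0 f N * c.
Proof. induction N. reflexivity. rewrite !sumR_S, IHN. ring. Qed.
Lemma ps_S v N : ps v (S N) = ps v N + Cmod (v (S N)) ^ 2.
Proof. reflexivity. Qed.
Lemma ps_O v : ps v 0 = Cmod (v 0%nat) ^ 2.
Proof. reflexivity. Qed.

Lemma ps_nonneg v N : 0 <= ps v N.
Proof. induction N. rewrite ps_O. apply pow2_ge_0.
  rewrite ps_S. pose proof (pow2_ge_0 (Cmod (v (S N)))); lra. Qed.

Lemma ps_incr v N : ps v N <= ps v (S N).
Proof. rewrite ps_S. pose proof (pow2_ge_0 (Cmod (v (S N)))); lra. Qed.

Lemma ps_mono v N M : (N <= M)%nat -> ps v N <= ps v M.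
Proof. induction 1. lra. eapply Rle_trans. apply IHle. apply ps_incr. Qed.

Lemma norm_le_coord v r n : norm_le v r -> Cmod (v n) <= r.
Proof.
  intros [Hr H]. specialize (H n).
  assert (Cmod (v n) ^ 2 <= ps v n).
  { destruct n. rewrite ps_O. lra. rewrite ps_S. pose proof (ps_nonneg v n). lra. }
  pose proof (Cmod_ge_0 (v n)). unfold ps in H0. 
  apply Rsqr_incr_0_var. unfold Rsqr. nra. auto.
Qed.

Lemma norm_le_mono v r s : norm_le v r -> r <= s -> norm_le v s.
Proof.
  intros [Hr H] Hrs. split. lra. intros N. specialize (H N). nra.
Qed.

Lemma norm_le_nonneg v r : norm_le v r -> 0 <= r.
Proof. intros [H _]; auto. Qed.

Lemma norm_le_zero r : 0 <= r -> norm_le (fun _ => (0:C)) r.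
Proof.
  intros Hr. split; auto. intros N. induction N. rewrite sumR_O, Cmod_0. nra. rewrite sumR_S. rewrite Cmod_0 in *. nra.
Qed.

Lemma norm_le_dom u v r : (forall n, Cmod (v n) <= Cmod (u n)) -> norm_le u r -> norm_le v r.
Proof.
  intros Hd [Hr H]. split; auto. intros N. eapply Rle_trans. 2: apply (H N).
  apply sum_Rle. intros n _. pose proof (Hd n). pose proof (Cmod_ge_0 (v n)). nra.
Qed.

Lemma norm_le_scal c v r : norm_le v r -> norm_le (fun n => Cmult c (v n)) (Cmod c * r).
Proof.
  intros [Hr H]. split. pose proof (Cmod_ge_0 c). nra.
  intros N. specialize (H N).
  replace (sum_f_R0 (fun n => Cmod (Cmult c (v n)) ^ 2) N) with
    (sum_f_R0 (fun n => Cmod (v n) ^ 2) N * (Cmod c ^ 2)).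
  pose proof (Cmod_ge_0 c). replace ((Cmod c * r)^2) with (r^2 * Cmod c ^2) by ring.
  apply Rmult_le_compat_r. nra. auto.
  rewrite <- sumR_scal_r. apply sum_eq. intros i _. rewrite Cmod_mult. ring.
Qed.

Lemma norm_le_zero_eq v : norm_le v 0 -> forall n, v n = (0:C).
Proof. intros H n. apply Cmod_eq_0. pose proof (norm_le_coord v 0 n H). pose proof (Cmod_ge_0 (v n)). lra. Qed.

Lemma norm_le_add u v r s : norm_le u r -> norm_le v s ->
  norm_le (fun n => Cplus (u n) (v n)) (r + s).
Proof.
  intros Hu Hv. pose proof (norm_le_nonneg _ _ Hu) as Hr. pose proof (norm_le_nonneg _ _ Hv) as Hs.
  destruct (Req_dec r 0) as [Er|Er].
  { subst. pose proof (norm_le_zero_eq u Hu). eapply norm_le_mono.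
    eapply norm_le_dom; [|apply Hv]. intros n. rewrite H. rewrite Cplus_0_l. lra. lra. }
  destruct (Req_dec s 0) as [Es|Es].
  { subst. pose proof (norm_le_zero_eq v Hv). eapply norm_le_mono.
    eapply norm_le_dom; [|apply Hu]. intros n. rewrite H. rewrite Cplus_0_r. lra. lra. }
  assert (Hr' : 0 < r) by lra. assert (Hs' : 0 < s) by lra.
  split. lra. intros N. destruct Hu as [_ Hu]. destruct Hv as [_ Hv].
  specialize (Hu N). specialize (Hv N).
  apply Rle_trans with (sum_f_R0 (fun n => (1 + s/r) * Cmod (u n) ^ 2 + (1 + r/s) * Cmod (v n) ^2) N).
  - apply sum_Rle. intros n _. pose proof (Cmod_triangle (u n) (v n)).
    pose proof (Cmod_ge_0 (u n)). pose proof (Cmod_ge_0 (v n)). pose proof (Cmod_ge_0 (Cplus (u n) (v n))).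
    set (w := Cmod (Cplus (u n) (v n))) in *. set (p := Cmod (u n)) in *. set (q := Cmod (v n)) in *.
    assert (w ^ 2 <= (p + q) ^ 2) by nra.
    assert ((p+q)^2 <= (1 + s/r) * p^2 + (1 + r/s) * q^2).
    { assert (0 <= (s/r) * p^2 + (r/s) * q^2 - 2 * p * q).
      { replace ((s/r) * p^2 + (r/s) * q^2 - 2 * p * q) with ((s * p - r * q)^2 / (r * s)) by (field; lra).
        apply Rdiv_le_0_compat. apply pow2_ge_0. apply Rmult_lt_0_compat; lra. }
      assert (E: (1 + s/r) * p^2 + (1 + r/s) * q^2 - (p+q)^2 = (s/r) * p^2 + (r/s) * q^2 - 2 * p * q) by ring. lra. }
    lra.
  - rewrite plus_sum. rewrite (sum_eq _ (fun n => Cmod (u n) ^ 2 * (1 + s/r))) by (intros; ring).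
    rewrite (sum_eq (fun n => (1 + r/s) * Cmod (v n) ^ 2) (fun n => Cmod (v n) ^ 2 * (1 + r/s))) by (intros; ring).
    rewrite !sumR_scal_r.
    assert (0 <= 1 + s/r). { assert (0 < s/r) by (apply Rdiv_lt_0_compat; lra). lra. }
    assert (0 <= 1 + r/s). { assert (0 < r/s) by (apply Rdiv_lt_0_compat; lra). lra. }
    apply Rle_trans with (r^2 * (1 + s/r) + s^2 * (1 + r/s)).
    apply Rplus_le_compat; apply Rmult_le_compat_r; auto.
    right. field. lra.
Qed.

Lemma norm_le_sum (f : nat -> vec) (r : nat -> R) d :
  (forall i, (i <= d)%nat -> norm_le (f i) (r i)) ->
  norm_le (fun n => sum_n (fun i => f i n) d) (sum_f_R0 r d).
Proof.
  induction d; intros H.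
  - simpl. replace (fun n => sum_n (fun i => f i n) 0) with (f 0%nat). apply H; lia.
    apply functional_extensionality. intros n. rewrite csum_O. auto.
  - simpl. replace (fun n => sum_n (fun i => f i n) (S d)) with
      (fun n => Cplus (sum_n (fun i => f i n) d) (f (S d) n)).
    apply norm_le_add. apply IHd. intros; apply H; lia. apply H; lia.
    apply functional_extensionality. intros n. rewrite csum_S. auto.
Qed.

Lemma norm_le_sub u v r s : norm_le u r -> norm_le v s -> norm_le (vsub u v) (r + s).
Proof.
  intros Hu Hv. unfold vsub. replace (fun n => Cminus (u n) (v n)) with
    (fun n => Cplus (u n) (Cmult (Copp 1) (v n))).
  replace (r + s) with (r + Cmod (Copp 1) * s). apply norm_le_add; auto. apply norm_le_scal; auto.
  rewrite Cmod_m1. ring.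
  apply functional_extensionality. intros n. unfold Cminus. ring.
Qed.

Lemma l2_ps x : l2 x -> forall N, ps x N <= Series (fun n => Cmod (x n) ^ 2).
Proof.
  intros Hx N. apply Series_correct in Hx.
  assert (is_lim_seq (sum_n (fun n => Cmod (x n) ^ 2)) (Series (fun n => Cmod (x n) ^ 2))) by exact Hx.
  unfold ps. rewrite <- sum_n_Reals. apply (is_lim_seq_incr_compare _ _ H).
  intros n. rewrite !sum_n_Reals. apply ps_incr.
Qed.

Lemma hnorm_nonneg x : 0 <= hnorm x.
Proof. apply sqrt_pos. Qed.

Lemma l2_norm_le x : l2 x -> norm_le x (hnorm x).
Proof.
  intros Hx. split. apply hnorm_nonneg. intros N.
  pose proof (l2_ps x Hx N). pose proof (ps_nonneg x N).
  unfold hnorm. rewrite pow2_sqrt by (unfold ps in *; lra). auto.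
Qed.

Lemma norm_le_l2 x r : norm_le x r -> l2 x.
Proof.
  intros [Hr H]. unfold l2.
  destruct (ex_finite_lim_seq_incr (sum_n (fun n => Cmod (x n) ^ 2)) (r^2)) as [l Hl].
  - intros n. rewrite !sum_n_Reals. apply ps_incr.
  - intros n. rewrite sum_n_Reals. apply H.
  - exists l. exact Hl.
Qed.

Lemma norm_le_hnorm x r : norm_le x r -> hnorm x <= r.
Proof.
  intros Hn. pose proof (norm_le_l2 _ _ Hn) as Hx. destruct Hn as [Hr H].
  apply Series_correct in Hx.
  assert (Rbar_le (Series (fun n => Cmod (x n) ^ 2)) (r^2)).
  { apply (is_lim_seq_le (sum_n (fun n => Cmod (x n) ^ 2)) (fun _ => r^2)).
    intros n. rewrite sum_n_Reals. apply H. exact Hx. apply is_lim_seq_const. }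
  simpl in H0. unfold hnorm. rewrite <- (sqrt_pow2 r Hr). apply sqrt_le_1_alt. auto.
Qed.

Lemma norm_le_hnorm' x r : norm_le x r -> norm_le x (hnorm x).
Proof. intros H. apply l2_norm_le. eapply norm_le_l2; eauto. Qed.

Lemma small_zero (z : C) K : 0 <= K -> (forall e, 0 < e -> Cmod z <= e * K) -> z = (0:C).
Proof.
  intros HK H. apply Cmod_eq_0. pose proof (Cmod_ge_0 z).
  destruct (Req_dec (Cmod z) 0); auto.
  specialize (H (Cmod z / (2 * (K + 1)))). 
  assert (0 < Cmod z / (2 * (K+1))) by (apply Rdiv_lt_0_compat; lra).
  specialize (H H2). 
  assert (Cmod z / (2 * (K + 1)) * K < Cmod z).
  { unfold Rdiv. rewrite Rmult_assoc. 
    assert (/ (2 * (K+1)) * K < 1). { apply (Rmult_lt_reg_l (2*(K+1))). lra. field_simplify; lra. }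
    nra. }
  lra.
Qed.

Lemma basis_norm k : norm_le (basis k) 1.
Proof.
  split. lra. intros N.
  apply Rle_trans with (sum_f_R0 (fun n => if Nat.eqb n k then 1 else 0) N).
  apply sum_Rle. intros n _. unfold basis. destruct (Nat.eqb n k). rewrite Cmod_1; lra. rewrite Cmod_0; lra.
  induction N. rewrite sumR_O. destruct (Nat.eqb 0 k); lra.
  rewrite sumR_S. destruct (Nat.eqb (S N) k) eqn:E.
  - apply Nat.eqb_eq in E. subst. rewrite (sum_eq _ (fun _ => 0)). 
    rewrite sum_cte. lra. intros i Hi. destruct (Nat.eqb_spec i (S N)); auto; lia.
  - lra.
Qed.

Lemma hnorm_basis k : hnorm (basis k) <= 1.
Proof. apply norm_le_hnorm. apply basis_norm. Qed.
Lemma l2_basis k : l2 (basis k).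
Proof. eapply norm_le_l2. apply basis_norm. Qed.

Opaque sum_n.

Lemma pow_S (A : op) i x : op_pow A (S i) x = A (op_pow A i x).
Proof. reflexivity. Qed.
Lemma pow_S' (A : op) i x : op_pow A (S i) x = op_pow A i (A x).
Proof. unfold op_pow. apply Nat.iter_succ_r. Qed.
Lemma pow_0 (A : op) x : op_pow A 0 x = x.
Proof. reflexivity. Qed.

Lemma T_add a u v : wshift a (fun n => Cplus (u n) (v n)) = fun n => Cplus (wshift a u n) (wshift a v n).
Proof. apply functional_extensionality. intros [|n]; simpl. cring. cring. Qed.
Lemma T_scal a c u : wshift a (fun n => Cmult c (u n)) = fun n => Cmult c (wshift a u n).
Proof. apply functional_extensionality. intros [|n]; simpl. cring. cring. Qed.

Lemma Tp_add a j u v : op_pow (wshift a) j (fun n => Cplus (u n) (v n)) =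
  fun n => Cplus (op_pow (wshift a) j u n) (op_pow (wshift a) j v n).
Proof. induction j. reflexivity. rewrite !pow_S, IHj. apply T_add. Qed.
Lemma Tp_scal a j c u : op_pow (wshift a) j (fun n => Cmult c (u n)) =
  fun n => Cmult c (op_pow (wshift a) j u n).
Proof. induction j. reflexivity. rewrite !pow_S, IHj. apply T_scal. Qed.

Lemma Tp_sum a j (f : nat -> vec) d : op_pow (wshift a) j (fun n => sum_n (fun i => f i n) d) =
  fun n => sum_n (fun i => op_pow (wshift a) j (f i) n) d.
Proof.
  induction d.
  - apply functional_extensionality; intros n. rewrite csum_O.
    f_equal. apply functional_extensionality; intros m. rewrite csum_O. auto.
  - replace (fun n => sum_n (fun i => f i n) (S d)) with
      (fun n => Cplus (sum_n (fun i => f i n) d) (f (S d) n)).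
    rewrite Tp_add, IHd. apply functional_extensionality; intros n. rewrite csum_S. auto.
    apply functional_extensionality; intros n. rewrite csum_S. auto.
Qed.

Lemma Tp_plus a i j x : op_pow (wshift a) i (op_pow (wshift a) j x) = op_pow (wshift a) (i + j) x.
Proof. induction i. reflexivity. simpl plus. rewrite !pow_S, IHi. auto. Qed.

Lemma T_Tp a j x : wshift a (op_pow (wshift a) j x) = op_pow (wshift a) j (wshift a x).
Proof. rewrite <- pow_S, pow_S'. auto. Qed.

Fixpoint pr (a : nat -> C) (m j : nat) : C :=
  match j with O => 1 | S j' => Cmult (pr a m j') (a (m + j')%nat) end.

Lemma Tp_formula a j w n : op_pow (wshift a) j w n =
  if Nat.leb j n then Cmult (pr a (n - j) j) (w (n - j)%nat) else 0.
Proof.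
  revert n. induction j; intros n.
  - simpl. rewrite Nat.sub_0_r. cring.
  - rewrite pow_S. destruct n as [|n]. reflexivity.
    simpl wshift. rewrite IHj. simpl Nat.leb. destruct (Nat.leb j n) eqn:E.
    + apply Nat.leb_le in E. replace (S n - S j)%nat with (n - j)%nat by lia. simpl pr.
      replace (n - j + j)%nat with n by lia. cring.
    + cring.
Qed.

Lemma Tp_S_0 a j w : op_pow (wshift a) (S j) w 0%nat = 0.
Proof. reflexivity. Qed.

Lemma pr_nz a (ha0 : forall n, a n <> (0:C)) m j : pr a m j <> (0:C).
Proof.
  induction j; simpl. intros H. injection H. lra.
  apply Cmult_neq_0; auto.
Qed.

Lemma a_decr a (hdec : forall n, Cmod (a (S n)) <= Cmod (a n)) p q :
  (q <= p)%nat -> Cmod (a p) <= Cmod (a q).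
Proof. induction 1. lra. eapply Rle_trans. apply hdec. auto. Qed.

Lemma pr_le a (hdec : forall n, Cmod (a (S n)) <= Cmod (a n)) m j :
  Cmod (pr a m j) <= Cmod (pr a 0 j).
Proof.
  induction j; simpl. lra. rewrite !Cmod_mult.
  apply Rmult_le_compat; try apply Cmod_ge_0; auto. apply a_decr; auto; lia.
Qed.

Lemma pr_S_le a (hdec : forall n, Cmod (a (S n)) <= Cmod (a n)) m i :
  Cmod (pr a m (S i)) <= Cmod (a i) * Cmod (pr a 0 i).
Proof.
  simpl. rewrite Cmod_mult. rewrite Rmult_comm.
  apply Rmult_le_compat; try apply Cmod_ge_0; auto. apply a_decr; auto; lia. apply pr_le; auto.
Qed.

Lemma shift_bound j : forall (f w : vec) K N, 0 <= K ->
  (forall n, (n < j)%nat -> f n = 0) -> (forall n, Cmod (f (n + j)%nat) <= K * Cmod (w n)) ->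
  ps f N <= K^2 * ps w N.
Proof.
  induction j; intros f w K N HK H0 H1.
  - unfold ps. rewrite <- sumR_scal. apply sum_Rle. intros n _. specialize (H1 n).
    rewrite Nat.add_0_r in H1. pose proof (Cmod_ge_0 (f n)). nra.
  - destruct N as [|N].
    + unfold ps. simpl. rewrite H0 by lia. rewrite Cmod_0. pose proof (Cmod_ge_0 (w 0%nat)). nra.
    + unfold ps. rewrite decomp_sum by lia. simpl pred. rewrite H0 by lia. rewrite Cmod_0.
      apply Rle_trans with (K^2 * ps w N).
      * pose proof (IHj (fun n => f (S n)) w K N HK). unfold ps in H. 
        assert (0 ^ 2 = 0) by ring. rewrite H2, Rplus_0_l. apply H.
        intros n Hn. apply H0. lia. intros n. replace (S (n + j)) with (n + S j)%nat by lia. auto.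
      * apply Rmult_le_compat_l. apply pow2_ge_0. apply ps_incr.
Qed.

Lemma Tp_bound a j w r K : norm_le w r -> 0 <= K -> (forall m, Cmod (pr a m j) <= K) ->
  norm_le (op_pow (wshift a) j w) (K * r).
Proof.
  intros [Hr Hw] HK Hpr. split. nra. intros N.
  apply Rle_trans with (K^2 * ps w N).
  apply shift_bound with j; auto.
  - intros n Hn. rewrite Tp_formula. replace (Nat.leb j n) with false. auto. symmetry; apply Nat.leb_gt; lia.
  - intros n. rewrite Tp_formula. replace (Nat.leb j (n + j)) with true by (symmetry; apply Nat.leb_le; lia).
    replace (n + j - j)%nat with n by lia. rewrite Cmod_mult. apply Rmult_le_compat_r. apply Cmod_ge_0. auto.
  - specialize (Hw N). unfold ps. replace ((K * r)^2) with (K^2 * r^2) by ring. apply Rmult_le_compat_l. 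
    apply pow2_ge_0. auto.
Qed.

Lemma Tp_e0 a j : op_pow (wshift a) j (basis 0) = fun n => Cmult (pr a 0 j) (basis j n).
Proof.
  apply functional_extensionality. intros n. rewrite Tp_formula. unfold basis.
  destruct (Nat.leb j n) eqn:E.
  - apply Nat.leb_le in E. destruct (Nat.eqb_spec (n - j) 0); destruct (Nat.eqb_spec n j); try lia.
    subst. rewrite Nat.sub_diag. cring. cring.
  - apply Nat.leb_gt in E. destruct (Nat.eqb_spec n j); try lia. cring.
Qed.

Lemma T_S a u n : wshift a u (S n) = Cmult (a n) (u n).
Proof. reflexivity. Qed.
Lemma T_O a u : wshift a u 0%nat = (0:C).
Proof. reflexivity. Qed.

Opaque sum_n.

Definition vadd (u v : vec) : vec := fun n => Cplus (u n) (v n).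
Definition vscal (c : C) (u : vec) : vec := fun n => Cmult c (u n).

Definition additive (A : op) := forall u v, A (fun n => Cplus (u n) (v n)) = fun n => Cplus (A u n) (A v n).
Definition homog (A : op) := forall c u, A (fun n => Cmult c (u n)) = fun n => Cmult c (A u n).

Lemma lin_sum (A : op) : additive A -> forall (f : nat -> vec) d,
  A (fun n => sum_n (fun i => f i n) d) = fun n => sum_n (fun i => A (f i) n) d.
Proof.
  intros HA f d. induction d.
  - replace (fun n => sum_n (fun i => f i n) 0) with (f 0%nat).
    apply functional_extensionality; intros n. rewrite csum_O. auto.
    apply functional_extensionality; intros n. rewrite csum_O. auto.
  - replace (fun n => sum_n (fun i => f i n) (S d)) with
      (fun n => Cplus (sum_n (fun i => f i n) d) (f (S d) n)).
    rewrite HA, IHd. apply functional_extensionality; intros n. rewrite csum_S. auto.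
    apply functional_extensionality; intros n. rewrite csum_S. auto.
Qed.

Lemma lin_zero (A : op) : homog A -> A (fun _ => (0:C)) = fun _ => (0:C).
Proof.
  intros H. replace (fun _ : nat => (0:C)) with (fun n : nat => Cmult 0 ((fun _ : nat => (0:C)) n)).
  rewrite H. apply functional_extensionality; intros n. cring.
  apply functional_extensionality; intros n. cring.
Qed.

Lemma lin_sub (A : op) : additive A -> homog A -> forall u v, A (vsub u v) = vsub (A u) (A v).
Proof.
  intros H1 H2 u v. unfold vsub.
  replace (fun n => Cminus (u n) (v n)) with (fun n => Cplus (u n) ((fun m => Cmult (Copp 1) (v m)) n)).
  rewrite H1, H2. apply functional_extensionality; intros n. unfold Cminus. cring.
  apply functional_extensionality; intros n. unfold Cminus. cring.
Qed.

Definition causal (A : op) := forall x y N, (forall n, (n <= N)%nat -> x n = y n) ->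
  forall n, (n <= N)%nat -> A x n = A y n.

Section Ops.
Variable a : nat -> C.
Hypothesis hdec : forall n, Cmod (a (S n)) <= Cmod (a n).

Notation T := (wshift a).

Lemma T_additive : additive T.  Proof. intros u v. apply T_add. Qed.
Lemma T_homog : homog T.  Proof. intros c u. apply T_scal. Qed.
Lemma Tp_additive j : additive (op_pow T j).  Proof. intros u v. apply Tp_add. Qed.
Lemma Tp_homog j : homog (op_pow T j).  Proof. intros c u. apply Tp_scal. Qed.

Lemma T_causal : causal T.
Proof. intros x y N H [|n] Hn; simpl. auto. rewrite H by lia. auto. Qed.

Lemma causal_comp A B : causal A -> causal B -> causal (op_comp A B).
Proof. intros HA HB x y N H n Hn. unfold op_comp. apply (HA _ _ N); auto. intros; apply (HB _ _ N); auto. Qed.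

Lemma Tp_causal j : causal (op_pow T j).
Proof.
  induction j. intros x y N H n Hn. apply H; auto.
  intros x y N H n Hn. rewrite !pow_S. apply (T_causal _ _ N); auto. intros; apply (IHj _ _ N); auto.
Qed.

Lemma poly_additive c d : additive (poly_op a c d).
Proof.
  intros u v. apply functional_extensionality; intros n. unfold poly_op.
  rewrite <- csum_plus. apply csum_ext. intros i _. rewrite Tp_add. cring.
Qed.
Lemma poly_homog c d : homog (poly_op a c d).
Proof.
  intros e u. apply functional_extensionality; intros n. unfold poly_op.
  rewrite <- csum_mult_l. apply csum_ext. intros i _. rewrite Tp_scal. cring.
Qed.
Lemma poly_causal c d : causal (poly_op a c d).
Proof.
  intros x y N H n Hn. unfold poly_op. apply csum_ext. intros i _. f_equal.
  apply (Tp_causal (S i) _ _ N); auto.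
Qed.

Lemma poly_commT c d u : poly_op a c d (T u) = T (poly_op a c d u).
Proof.
  apply functional_extensionality; intros [|n].
  - rewrite T_O. unfold poly_op. apply csum_zero'. intros i _. rewrite <- T_Tp. rewrite T_O. cring.
  - rewrite (T_S a (poly_op a c d u)). unfold poly_op. rewrite <- csum_mult_l. apply csum_ext. intros i _.
    rewrite <- T_Tp. rewrite T_S. cring.
Qed.

Lemma poly_bound c d v r : norm_le v r ->
  norm_le (poly_op a c d v) (sum_f_R0 (fun i => Cmod (c i) * Cmod (pr a 0 (S i))) d * r).
Proof.
  intros Hv. rewrite <- sumR_scal_r. unfold poly_op.
  apply (norm_le_sum (fun i n => Cmult (c i) (op_pow T (S i) v n))).
  intros i _. rewrite Rmult_assoc. apply norm_le_scal. apply Tp_bound; auto.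
  apply Cmod_ge_0. intros m. apply pr_le; auto.
Qed.

Lemma Tp_bound' j v r : norm_le v r -> norm_le (op_pow T j v) (Cmod (pr a 0 j) * r).
Proof. intros H. apply Tp_bound; auto. apply Cmod_ge_0. intros m; apply pr_le; auto. Qed.

Inductive pexpr :=
| PPow (m : nat)
| PPoly (c : nat -> C) (d : nat)
| PAdd (e1 e2 : pexpr)
| PScal (c : C) (e : pexpr)
| PComp (e1 e2 : pexpr).

Fixpoint den (E : pexpr) : op :=
  match E with
  | PPow m => op_pow T m
  | PPoly c d => poly_op a c d
  | PAdd E1 E2 => op_add (den E1) (den E2)
  | PScal c E1 => op_scal c (den E1)
  | PComp E1 E2 => op_comp (den E1) (den E2)
  end.

Lemma den_additive E : additive (den E).
Proof.
  induction E; simpl.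
  - apply Tp_additive.
  - apply poly_additive.
  - intros u v. unfold op_add. rewrite IHE1, IHE2. apply functional_extensionality; intros n. cring.
  - intros u v. unfold op_scal. rewrite IHE. apply functional_extensionality; intros n. cring.
  - intros u v. unfold op_comp. rewrite IHE2, IHE1. auto.
Qed.

Lemma den_homog E : homog (den E).
Proof.
  induction E; simpl.
  - apply Tp_homog.
  - apply poly_homog.
  - intros e u. unfold op_add. rewrite IHE1, IHE2. apply functional_extensionality; intros n. cring.
  - intros e u. unfold op_scal. rewrite IHE. apply functional_extensionality; intros n. cring.
  - intros e u. unfold op_comp. rewrite IHE2, IHE1. auto.
Qed.

Lemma den_causal E : causal (den E).
Proof.
  induction E; simpl.
  - apply Tp_causal.
  - apply poly_causal.
  - intros x y N H n Hn. unfold op_add. rewrite (IHE1 x y N), (IHE2 x y N); auto.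
  - intros x y N H n Hn. unfold op_scal. rewrite (IHE x y N); auto.
  - apply causal_comp; auto.
Qed.

Lemma den_commT E u : den E (T u) = T (den E u).
Proof.
  revert u. induction E; intros u; simpl.
  - symmetry. apply T_Tp.
  - apply poly_commT.
  - unfold op_add. rewrite IHE1, IHE2. symmetry. apply T_add.
  - unfold op_scal. rewrite IHE. symmetry. apply T_scal.
  - unfold op_comp. rewrite IHE2, IHE1. auto.
Qed.

Lemma den_commTp E j u : den E (op_pow T j u) = op_pow T j (den E u).
Proof. induction j. auto. rewrite !pow_S, den_commT, IHj. auto. Qed.

Lemma den_bound E : exists K, 0 <= K /\ forall v r, norm_le v r -> norm_le (den E v) (K * r).
Proof.
  induction E; simpl.
  - exists (Cmod (pr a 0 m)). split. apply Cmod_ge_0. intros. apply Tp_bound'; auto.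
  - exists (sum_f_R0 (fun i => Cmod (c i) * Cmod (pr a 0 (S i))) d). split.
    + apply cond_pos_sum. intros; apply Rmult_le_pos; apply Cmod_ge_0.
    + intros. apply poly_bound; auto.
  - destruct IHE1 as [K1 [H1 B1]]. destruct IHE2 as [K2 [H2 B2]]. exists (K1 + K2). split. lra.
    intros v r Hv. rewrite Rmult_plus_distr_r. unfold op_add. apply norm_le_add; auto.
  - destruct IHE as [K [H B]]. exists (Cmod c * K). split. apply Rmult_le_pos; auto. apply Cmod_ge_0.
    intros v r Hv. rewrite Rmult_assoc. unfold op_scal. apply norm_le_scal; auto.
  - destruct IHE1 as [K1 [H1 B1]]. destruct IHE2 as [K2 [H2 B2]]. exists (K1 * K2). split. apply Rmult_le_pos; auto.
    intros v r Hv. rewrite Rmult_assoc. unfold op_comp. apply B1. auto.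
Qed.

Definition FS (v u : vec) := exists (c : nat -> C) (d : nat),
  u = fun n => sum_n (fun m => Cmult (c m) (op_pow T m v n)) d.

Lemma FS_base v : FS v v.
Proof. exists (fun _ => 1%R : C), 0%nat. apply functional_extensionality; intros n. rewrite csum_O. simpl. cring. Qed.

Lemma FS_zero v : FS v (fun _ => (0:C)).
Proof. exists (fun _ => (0:C)), 0%nat. apply functional_extensionality; intros n. rewrite csum_O. cring. Qed.

Lemma FS_add v u1 u2 : FS v u1 -> FS v u2 -> FS v (fun n => Cplus (u1 n) (u2 n)).
Proof.
  intros [c1 [d1 E1]] [c2 [d2 E2]]. subst.
  exists (fun m => Cplus (if Nat.leb m d1 then c1 m else 0) (if Nat.leb m d2 then c2 m else 0)), (d1 + d2)%nat.
  apply functional_extensionality; intros n.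
  symmetry. rewrite (csum_ext _ (fun m => Cplus (if Nat.leb m d1 then Cmult (c1 m) (op_pow T m v n) else 0)
     (if Nat.leb m d2 then Cmult (c2 m) (op_pow T m v n) else 0))).
  - rewrite csum_plus. erewrite (csum_pad' (fun m => Cmult (c1 m) (op_pow T m v n)) d1 (d1+d2)).
    erewrite (csum_pad' (fun m => Cmult (c2 m) (op_pow T m v n)) d2 (d1+d2)). auto.
    lia. intros; reflexivity. lia. intros; reflexivity.
  - intros i _. destruct (Nat.leb i d1); destruct (Nat.leb i d2); cring.
Qed.

Lemma FS_scal v e u : FS v u -> FS v (fun n => Cmult e (u n)).
Proof.
  intros [c [d E]]. subst. exists (fun m => Cmult e (c m)), d.
  apply functional_extensionality; intros n. rewrite <- csum_mult_l. apply csum_ext. intros; cring.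
Qed.

Lemma FS_T v u : FS v u -> FS v (T u).
Proof.
  intros [c [d E]]. subst. exists (fun m => match m with O => (0:C) | S m' => c m' end), (S d).
  rewrite (lin_sum T T_additive). apply functional_extensionality; intros n.
  rewrite csum_shift. rewrite (csum_ext (fun i => T (fun n0 => Cmult (c i) (op_pow T i v n0)) n)
     (fun i => Cmult (c i) (op_pow T (S i) v n))).
  toC. cbv beta iota. rewrite Cmult_0_l, Cplus_0_l. reflexivity.
  intros i _. rewrite T_scal. rewrite pow_S. auto.
Qed.

Lemma FS_pow v u j : FS v u -> FS v (op_pow T j u).
Proof. intros H. induction j. auto. rewrite pow_S. apply FS_T; auto. Qed.

Lemma FS_sum v (f : nat -> vec) d : (forall i, (i <= d)%nat -> FS v (f i)) ->
  FS v (fun n => sum_n (fun i => f i n) d).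
Proof.
  induction d; intros H.
  - replace (fun n => sum_n (fun i => f i n) 0) with (f 0%nat). apply H; lia.
    apply functional_extensionality; intros n. rewrite csum_O. auto.
  - replace (fun n => sum_n (fun i => f i n) (S d)) with
      (fun n => Cplus (sum_n (fun i => f i n) d) (f (S d) n)).
    apply FS_add. apply IHd. intros; apply H; lia. apply H; lia.
    apply functional_extensionality; intros n. rewrite csum_S. auto.
Qed.

Lemma FS_den v E u : FS v u -> FS v (den E u).
Proof.
  revert u. induction E; intros u Hu; simpl.
  - apply FS_pow; auto.
  - unfold poly_op. apply (FS_sum v (fun i n => Cmult (c i) (op_pow T (S i) u n))).
    intros i _. apply FS_scal. apply FS_pow. auto.
  - unfold op_add. apply FS_add; auto.
  - unfold op_scal. apply FS_scal; auto.
  - unfold op_comp. auto.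
Qed.

End Ops.

Opaque sum_n.

Lemma vsub_self u : vsub u u = fun _ => (0:C).
Proof. apply functional_extensionality; intros n. unfold vsub, Cminus. cring. Qed.

Lemma op_close_ext A B e : 0 <= e -> (forall x, l2 x -> A x = B x) -> op_close A B e.
Proof.
  intros He H x Hx. rewrite H by auto. rewrite vsub_self. apply norm_le_zero.
  apply Rmult_le_pos; auto. apply hnorm_nonneg.
Qed.

Lemma vsub_tri u v w : vsub u w = fun n => Cplus (vsub u v n) (vsub v w n).
Proof. apply functional_extensionality; intros n. unfold vsub, Cminus. cring. Qed.

Lemma op_close_tri A B C' e1 e2 : op_close A B e1 -> op_close B C' e2 -> op_close A C' (e1 + e2).
Proof.
  intros H1 H2 x Hx. rewrite (vsub_tri _ (B x)). rewrite Rmult_plus_distr_r.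
  apply norm_le_add; auto.
Qed.

Lemma op_close_sym A B e : op_close A B e -> op_close B A e.
Proof.
  intros H x Hx. replace (vsub (B x) (A x)) with (fun n => Cmult (Copp 1) (vsub (A x) (B x) n)).
  replace (e * hnorm x) with (Cmod (Copp 1) * (e * hnorm x)) by (rewrite Cmod_m1; ring).
  apply norm_le_scal; auto.
  apply functional_extensionality; intros n. unfold vsub, Cminus. cring.
Qed.

Lemma op_close_mono A B e1 e2 : op_close A B e1 -> e1 <= e2 -> op_close A B e2.
Proof.
  intros H He x Hx. eapply norm_le_mono. apply H; auto. apply Rmult_le_compat_r; auto. apply hnorm_nonneg.
Qed.

Lemma op_close_nonneg_coord A B e x n : op_close A B e -> l2 x ->
  Cmod (A x n - B x n)%C <= e * hnorm x.
Proof. intros H Hx. apply (norm_le_coord (vsub (A x) (B x))). apply H; auto. Qed.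

Lemma small_zero2 (z : C) K : (forall e, 0 < e -> Cmod z <= e * K) -> z = (0:C).
Proof.
  intros H. assert (0 <= K \/ K < 0) as [HK|HK] by lra.
  apply (small_zero z K); auto.
  exfalso. specialize (H 1 Rlt_0_1). pose proof (Cmod_ge_0 z). lra.
Qed.

Section InAT.
Variable a : nat -> C.
Hypothesis hdec : forall n, Cmod (a (S n)) <= Cmod (a n).
Notation T := (wshift a).

Lemma inAT_poly c d : inAT a (poly_op a c d).
Proof. intros e He. exists c, d. apply op_close_ext. lra. auto. Qed.

Lemma inAT_ext A B : inAT a A -> (forall x, l2 x -> A x = B x) -> inAT a B.
Proof.
  intros HA H e He. destruct (HA e He) as [c [d Hc]]. exists c, d.
  intros x Hx. rewrite <- H by auto. apply Hc; auto.
Qed.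

Definition IsPoly (F : op) := exists c d, forall x, F x = poly_op a c d x.

Lemma IsPoly_poly c d : IsPoly (poly_op a c d).
Proof. exists c, d. auto. Qed.

Lemma IsPoly_add F G : IsPoly F -> IsPoly G -> IsPoly (op_add F G).
Proof.
  intros [c1 [d1 E1]] [c2 [d2 E2]].
  exists (fun m => Cplus (if Nat.leb m d1 then c1 m else 0) (if Nat.leb m d2 then c2 m else 0)), (d1 + d2)%nat.
  intros x. unfold op_add. rewrite E1, E2. apply functional_extensionality; intros n. unfold poly_op.
  symmetry. rewrite (csum_ext _ (fun m => Cplus (if Nat.leb m d1 then Cmult (c1 m) (op_pow T (S m) x n) else 0)
     (if Nat.leb m d2 then Cmult (c2 m) (op_pow T (S m) x n) else 0))).
  - rewrite csum_plus. erewrite (csum_pad' (fun m => Cmult (c1 m) (op_pow T (S m) x n)) d1 (d1+d2)).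
    erewrite (csum_pad' (fun m => Cmult (c2 m) (op_pow T (S m) x n)) d2 (d1+d2)). auto.
    lia. intros; reflexivity. lia. intros; reflexivity.
  - intros i _. destruct (Nat.leb i d1); destruct (Nat.leb i d2); cring.
Qed.

Lemma IsPoly_scal e F : IsPoly F -> IsPoly (op_scal e F).
Proof.
  intros [c [d E]]. exists (fun m => Cmult e (c m)), d. intros x. unfold op_scal. rewrite E.
  apply functional_extensionality; intros n. unfold poly_op. rewrite <- csum_mult_l. apply csum_ext. intros; cring.
Qed.

Lemma IsPoly_T F : IsPoly F -> IsPoly (op_comp T F).
Proof.
  intros [c [d E]]. exists (fun m => match m with O => (0:C) | S m' => c m' end), (S d).
  intros x. unfold op_comp. rewrite E. unfold poly_op at 1.
  rewrite (lin_sum T (T_additive a)). apply functional_extensionality; intros n.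
  unfold poly_op. rewrite csum_shift.
  rewrite (csum_ext (fun i => T (fun n0 => Cmult (c i) (op_pow T (S i) x n0)) n)
     (fun i => Cmult (c i) (op_pow T (S (S i)) x n))).
  toC. cbv beta iota. rewrite Cmult_0_l, Cplus_0_l. reflexivity.
  intros i _. rewrite T_scal. rewrite (pow_S _ (S i)). auto.
Qed.

Lemma IsPoly_ext F G : IsPoly F -> (forall x, G x = F x) -> IsPoly G.
Proof. intros [c [d E]] H. exists c, d. intros x. rewrite H. auto. Qed.

Lemma IsPoly_Tp j F : IsPoly F -> IsPoly (op_comp (op_pow T j) F).
Proof.
  intros H. induction j.
  - apply (IsPoly_ext F); auto.
  - apply (IsPoly_ext (op_comp T (op_comp (op_pow T j) F))). apply IsPoly_T; auto.
    intros x. reflexivity.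
Qed.

Lemma IsPoly_sum (G : nat -> op) d : (forall i, (i <= d)%nat -> IsPoly (G i)) ->
  IsPoly (fun x n => sum_n (fun i => G i x n) d).
Proof.
  induction d; intros H.
  - apply (IsPoly_ext (G 0%nat)). apply H; lia. intros x. apply functional_extensionality; intros n.
    rewrite csum_O. auto.
  - apply (IsPoly_ext (op_add (fun x n => sum_n (fun i => G i x n) d) (G (S d)))).
    apply IsPoly_add. apply IHd. intros; apply H; lia. apply H; lia.
    intros x. apply functional_extensionality; intros n. unfold op_add. rewrite csum_S. auto.
Qed.

Lemma IsPoly_comp c d F : IsPoly F -> IsPoly (op_comp (poly_op a c d) F).
Proof.
  intros HF. unfold op_comp, poly_op.
  apply (IsPoly_sum (fun i x n => Cmult (c i) (op_pow T (S i) (F x) n))).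
  intros i _. apply (IsPoly_scal (c i) (op_comp (op_pow T (S i)) F)). apply IsPoly_Tp; auto.
Qed.

Lemma inAT_IsPoly F : IsPoly F -> inAT a F.
Proof. intros [c [d E]]. apply (inAT_ext (poly_op a c d)). apply inAT_poly. intros; auto. Qed.

Lemma inAT_Tp j : (1 <= j)%nat -> inAT a (op_pow T j).
Proof.
  intros Hj. apply inAT_IsPoly. destruct j. lia.
  apply (IsPoly_ext (op_comp (op_pow T j) (op_pow T 1))). apply IsPoly_Tp.
  exists (fun _ => 1%R : C), 0%nat. intros x. apply functional_extensionality; intros n. unfold poly_op.
  rewrite csum_O. cring.
  intros x. unfold op_comp. rewrite Tp_plus. f_equal. lia.
Qed.

Lemma inAT_close A : inAT a A -> forall e, 0 < e -> exists c d, op_close A (poly_op a c d) e.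
Proof. auto. Qed.

Lemma inAT_add A B : inAT a A -> inAT a B -> inAT a (op_add A B).
Proof.
  intros HA HB e He. destruct (HA (e/2)) as [c1 [d1 H1]]. lra. destruct (HB (e/2)) as [c2 [d2 H2]]. lra.
  destruct (IsPoly_add _ _ (IsPoly_poly c1 d1) (IsPoly_poly c2 d2)) as [c [d E]].
  exists c, d. intros x Hx. rewrite <- E. unfold op_add.
  replace (vsub (fun n => Cplus (A x n) (B x n)) (fun n => Cplus (poly_op a c1 d1 x n) (poly_op a c2 d2 x n)))
    with (fun n => Cplus (vsub (A x) (poly_op a c1 d1 x) n) (vsub (B x) (poly_op a c2 d2 x) n)).
  replace (e * hnorm x) with (e/2 * hnorm x + e/2 * hnorm x) by field.
  apply norm_le_add; auto.
  apply functional_extensionality; intros n. unfold vsub, Cminus. cring.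
Qed.

Lemma inAT_scal e0 A : inAT a A -> inAT a (op_scal e0 A).
Proof.
  intros HA e He. destruct (HA (e / (Cmod e0 + 1))) as [c1 [d1 H1]].
  apply Rdiv_lt_0_compat; auto. pose proof (Cmod_ge_0 e0); lra.
  destruct (IsPoly_scal e0 _ (IsPoly_poly c1 d1)) as [c [d E]].
  exists c, d. intros x Hx. rewrite <- E. unfold op_scal.
  replace (vsub (fun n => Cmult e0 (A x n)) (fun n => Cmult e0 (poly_op a c1 d1 x n)))
    with (fun n => Cmult e0 (vsub (A x) (poly_op a c1 d1 x) n)).
  eapply norm_le_mono. apply norm_le_scal. apply H1; auto.
  pose proof (Cmod_ge_0 e0). pose proof (hnorm_nonneg x).
  rewrite <- Rmult_assoc. apply Rmult_le_compat_r; auto.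
  unfold Rdiv. rewrite <- Rmult_assoc. rewrite (Rmult_comm _ e). rewrite Rmult_assoc.
  rewrite <- (Rmult_1_r e) at 2. apply Rmult_le_compat_l. lra.
  apply (Rmult_le_reg_r (Cmod e0 + 1)). lra. rewrite Rmult_assoc, Rinv_l by lra. lra.
  apply functional_extensionality; intros n. unfold vsub, Cminus. cring.
Qed.

Lemma inAT_bound A : inAT a A -> exists B, 0 <= B /\ forall x, l2 x -> norm_le (A x) (B * hnorm x).
Proof.
  intros HA. destruct (HA 1 Rlt_0_1) as [c [d H]].
  set (K := sum_f_R0 (fun i => Cmod (c i) * Cmod (pr a 0 (S i))) d).
  assert (HK : 0 <= K). { apply cond_pos_sum. intros; apply Rmult_le_pos; apply Cmod_ge_0. }
  exists (1 + K). split. lra. intros x Hx.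
  replace (A x) with (fun n => Cplus (vsub (A x) (poly_op a c d x) n) (poly_op a c d x n)).
  rewrite Rmult_plus_distr_r. apply norm_le_add. apply H; auto.
  apply poly_bound; auto. apply l2_norm_le; auto.
  apply functional_extensionality; intros n. unfold vsub, Cminus. cring.
Qed.

Lemma inAT_l2 A x : inAT a A -> l2 x -> l2 (A x).
Proof. intros HA Hx. destruct (inAT_bound A HA) as [B [_ HB]]. eapply norm_le_l2. apply HB; auto. Qed.

Lemma inAT_comp A X : inAT a A -> inAT a X -> inAT a (op_comp A X).
Proof.
  intros HA HX e He. destruct (inAT_bound X HX) as [B [HB0 HB]].
  destruct (HA (e / 2 / (B + 1))) as [c1 [d1 H1]].
  { apply Rdiv_lt_0_compat; lra. }
  set (K := sum_f_R0 (fun i => Cmod (c1 i) * Cmod (pr a 0 (S i))) d1).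
  assert (HK : 0 <= K). { apply cond_pos_sum. intros; apply Rmult_le_pos; apply Cmod_ge_0. }
  destruct (HX (e / 2 / (K + 1))) as [c2 [d2 H2]].
  { apply Rdiv_lt_0_compat; lra. }
  destruct (IsPoly_comp c1 d1 _ (IsPoly_poly c2 d2)) as [c [d E]].
  exists c, d. intros x Hx. rewrite <- E. unfold op_comp.
  assert (HXx : l2 (X x)) by (apply inAT_l2; auto).
  rewrite (vsub_tri _ (poly_op a c1 d1 (X x))).
  replace (e * hnorm x) with (e / 2 / (B + 1) * (B * hnorm x) + K * (e / 2 / (K + 1) * hnorm x) +
     (e * hnorm x - (e / 2 / (B + 1) * (B * hnorm x) + K * (e / 2 / (K + 1) * hnorm x)))) by ring.
  apply norm_le_mono with (e / 2 / (B + 1) * (B * hnorm x) + K * (e / 2 / (K + 1) * hnorm x)).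
  apply norm_le_add.
  - eapply norm_le_mono. apply H1; auto. apply Rmult_le_compat_l. apply Rlt_le, Rdiv_lt_0_compat; lra.
    apply norm_le_hnorm. apply HB; auto.
  - rewrite <- (lin_sub _ (poly_additive a c1 d1) (poly_homog a c1 d1)). apply poly_bound; auto.
  - pose proof (hnorm_nonneg x).
    assert (e / 2 / (B + 1) * (B * hnorm x) <= e/2 * hnorm x).
    { replace (e / 2 / (B + 1) * (B * hnorm x)) with ((e/2 * hnorm x) * (B / (B+1))) by (field; lra).
      rewrite <- (Rmult_1_r (e/2 * hnorm x)) at 2. apply Rmult_le_compat_l. nra.
      apply (Rmult_le_reg_r (B+1)). lra. unfold Rdiv. rewrite Rmult_assoc, Rinv_l by lra. lra. }
    assert (K * (e / 2 / (K + 1) * hnorm x) <= e/2 * hnorm x).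
    { replace (K * (e / 2 / (K + 1) * hnorm x)) with ((e/2 * hnorm x) * (K / (K+1))) by (field; lra).
      rewrite <- (Rmult_1_r (e/2 * hnorm x)) at 2. apply Rmult_le_compat_l. nra.
      apply (Rmult_le_reg_r (K+1)). lra. unfold Rdiv. rewrite Rmult_assoc, Rinv_l by lra. lra. }
    lra.
Qed.

End InAT.

Opaque sum_n.

Lemma l2_lin x y c1 c2 : l2 x -> l2 y -> l2 (fun n => Cplus (Cmult c1 (x n)) (Cmult c2 (y n))).
Proof.
  intros Hx Hy. eapply norm_le_l2. apply norm_le_add; apply norm_le_scal; apply l2_norm_le; eauto.
Qed.

Section Lin.
Variable a : nat -> C.
Hypothesis hdec : forall n, Cmod (a (S n)) <= Cmod (a n).
Notation T := (wshift a).



Lemma Cmod_lin3 (p q r c1 c2 : C) : Cmod (Cminus p (Cplus (Cmult c1 q) (Cmult c2 r))) <=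
  Cmod p + Cmod c1 * Cmod q + Cmod c2 * Cmod r.
Proof.
  unfold Cminus. eapply Rle_trans. apply Cmod_triangle. rewrite Cmod_opp.
  eapply Rle_trans. apply Rplus_le_compat_l. apply Cmod_triangle. rewrite !Cmod_mult. lra.
Qed.

Lemma Cminus_zero (u v : C) : Cminus u v = (0:C) -> u = v.
Proof. intros H. replace u with (Cplus (Cminus u v) v) by (unfold Cminus; cring). rewrite H. cring. Qed.

Lemma inAT_lin A x y c1 c2 : inAT a A -> l2 x -> l2 y ->
  A (fun n => Cplus (Cmult c1 (x n)) (Cmult c2 (y n))) = fun n => Cplus (Cmult c1 (A x n)) (Cmult c2 (A y n)).
Proof.
  intros HA Hx Hy. set (w := fun n => Cplus (Cmult c1 (x n)) (Cmult c2 (y n))).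
  assert (Hw : l2 w) by (apply l2_lin; auto).
  apply functional_extensionality; intros n. apply Cminus_zero.
  apply (small_zero2 _ (hnorm w + Cmod c1 * hnorm x + Cmod c2 * hnorm y)).
  intros e He. destruct (HA e He) as [c [d H]].
  set (P := poly_op a c d).
  assert (EP : P w = fun n => Cplus (Cmult c1 (P x n)) (Cmult c2 (P y n))).
  { unfold w, P. rewrite (poly_additive a c d (fun n => Cmult c1 (x n)) (fun n => Cmult c2 (y n))).
    rewrite !poly_homog. auto. }
  replace (Cminus (A w n) (Cplus (Cmult c1 (A x n)) (Cmult c2 (A y n)))) with
    (Cminus (Cminus (A w n) (P w n)) (Cplus (Cmult c1 (Cminus (A x n) (P x n))) (Cmult c2 (Cminus (A y n) (P y n))))).
  2: { rewrite EP. unfold Cminus. cring. }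
  eapply Rle_trans. apply Cmod_lin3.
  pose proof (op_close_nonneg_coord A P e w n H Hw).
  pose proof (op_close_nonneg_coord A P e x n H Hx).
  pose proof (op_close_nonneg_coord A P e y n H Hy).
  pose proof (Cmod_ge_0 c1). pose proof (Cmod_ge_0 c2).
  assert (Cmod c1 * Cmod (Cminus (A x n) (P x n)) <= Cmod c1 * (e * hnorm x)) by (apply Rmult_le_compat_l; auto).
  assert (Cmod c2 * Cmod (Cminus (A y n) (P y n)) <= Cmod c2 * (e * hnorm y)) by (apply Rmult_le_compat_l; auto).
  unfold vsub in *. nra.
Qed.

Lemma inAT_add_l2 A x y : inAT a A -> l2 x -> l2 y ->
  A (fun n => Cplus (x n) (y n)) = fun n => Cplus (A x n) (A y n).
Proof.
  intros HA Hx Hy. pose proof (inAT_lin A x y 1 1 HA Hx Hy).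
  replace (fun n => Cplus (x n) (y n)) with (fun n => Cplus (Cmult 1 (x n)) (Cmult 1 (y n))).
  rewrite H. apply functional_extensionality; intros n. cring.
  apply functional_extensionality; intros n. cring.
Qed.

Lemma inAT_scal_l2 A c x : inAT a A -> l2 x -> A (fun n => Cmult c (x n)) = fun n => Cmult c (A x n).
Proof.
  intros HA Hx. pose proof (inAT_lin A x x c 0 HA Hx Hx).
  replace (fun n => Cmult c (x n)) with (fun n => Cplus (Cmult c (x n)) (Cmult 0 (x n))).
  rewrite H. apply functional_extensionality; intros n. cring.
  apply functional_extensionality; intros n. cring.
Qed.

Lemma inAT_sub_l2 A x y : inAT a A -> l2 x -> l2 y -> A (vsub x y) = vsub (A x) (A y).
Proof.
  intros HA Hx Hy. pose proof (inAT_lin A x y 1 (Copp 1) HA Hx Hy). unfold vsub.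
  replace (fun n => Cminus (x n) (y n)) with (fun n => Cplus (Cmult 1 (x n)) (Cmult (Copp 1) (y n))).
  rewrite H. apply functional_extensionality; intros n. unfold Cminus. cring.
  apply functional_extensionality; intros n. unfold Cminus. cring.
Qed.

Lemma l2_sum (f : nat -> vec) d : (forall i, (i <= d)%nat -> l2 (f i)) -> l2 (fun n => sum_n (fun i => f i n) d).
Proof.
  intros H. eapply norm_le_l2. apply (norm_le_sum f (fun i => hnorm (f i))). intros; apply l2_norm_le; auto.
Qed.

Lemma inAT_sum_l2 A (f : nat -> vec) d : inAT a A -> (forall i, (i <= d)%nat -> l2 (f i)) ->
  A (fun n => sum_n (fun i => f i n) d) = fun n => sum_n (fun i => A (f i) n) d.
Proof.
  intros HA. induction d; intros H.
  - replace (fun n => sum_n (fun i => f i n) 0) with (f 0%nat).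
    apply functional_extensionality; intros n. rewrite csum_O. auto.
    apply functional_extensionality; intros n. rewrite csum_O. auto.
  - replace (fun n => sum_n (fun i => f i n) (S d)) with
      (fun n => Cplus (sum_n (fun i => f i n) d) (f (S d) n)).
    2: { apply functional_extensionality; intros n. rewrite csum_S. auto. }
    assert (L1 : l2 (fun n => sum_n (fun i => f i n) d)) by (apply l2_sum; intros; apply H; lia).
    assert (L2 : l2 (f (S d))) by (apply H; lia).
    rewrite (inAT_add_l2 A _ _ HA L1 L2). rewrite IHd by (intros; apply H; lia).
    apply functional_extensionality; intros n. rewrite csum_S. auto.
Qed.

Lemma l2_Tp j x : l2 x -> l2 (op_pow T j x).
Proof. intros Hx. eapply norm_le_l2. apply Tp_bound'; auto. apply l2_norm_le; auto. Qed.

Lemma inAT_commT A x : inAT a A -> l2 x -> A (T x) = T (A x).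
Proof.
  intros HA Hx. assert (HTx : l2 (T x)) by (apply (l2_Tp 1); auto).
  apply functional_extensionality; intros m. apply Cminus_zero.
  apply (small_zero2 _ (hnorm (T x) + Cmod (pr a 0 1) * hnorm x)).
  intros e He. destruct (HA e He) as [c [d H]]. set (P := poly_op a c d).
  replace (Cminus (A (T x) m) (T (A x) m)) with
    (Cplus (vsub (A (T x)) (P (T x)) m) (T (vsub (P x) (A x)) m)).
  2: { unfold P. rewrite poly_commT. rewrite (lin_sub T (T_additive a) (T_homog a)). unfold vsub, Cminus. cring. }
  eapply Rle_trans. apply Cmod_triangle.
  pose proof (op_close_nonneg_coord A P e (T x) m H HTx).
  assert (Cmod (T (vsub (P x) (A x)) m) <= Cmod (pr a 0 1) * (e * hnorm x)).
  { apply (norm_le_coord _ _ m). apply (Tp_bound' a hdec 1). apply op_close_sym; auto. }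
  unfold vsub in *. nra.
Qed.

Lemma inAT_commTp A j x : inAT a A -> l2 x -> A (op_pow T j x) = op_pow T j (A x).
Proof.
  intros HA Hx. induction j. auto. rewrite !pow_S. rewrite inAT_commT; auto. rewrite IHj. auto.
  apply l2_Tp; auto.
Qed.

Lemma inAT_commP A c d x : inAT a A -> l2 x -> A (poly_op a c d x) = poly_op a c d (A x).
Proof.
  intros HA Hx. unfold poly_op at 1.
  rewrite (inAT_sum_l2 A (fun i n => Cmult (c i) (op_pow T (S i) x n))); auto.
  apply functional_extensionality; intros n. unfold poly_op. apply csum_ext. intros i _.
  rewrite inAT_scal_l2, inAT_commTp; auto. apply l2_Tp; auto.
  intros i _. eapply norm_le_l2. apply norm_le_scal. apply l2_norm_le. apply l2_Tp; auto.
Qed.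

End Lin.

Opaque sum_n.

Lemma frac_le K e h : 0 <= K -> 0 <= h -> 0 < e -> K * (e / (K + 1) * h) <= e * h.
Proof.
  intros HK Hh He. replace (K * (e / (K + 1) * h)) with ((e * h) * (K / (K+1))) by (field; lra).
  rewrite <- (Rmult_1_r (e * h)) at 2. apply Rmult_le_compat_l. nra.
  apply (Rmult_le_reg_r (K+1)). lra. unfold Rdiv. rewrite Rmult_assoc, Rinv_l by lra. lra.
Qed.

Lemma frac_pos K e : 0 <= K -> 0 < e -> 0 < e / (K + 1).
Proof. intros; apply Rdiv_lt_0_compat; lra. Qed.

Lemma op_close_add X X' Y Y' e1 e2 : op_close X X' e1 -> op_close Y Y' e2 ->
  op_close (op_add X Y) (op_add X' Y') (e1 + e2).
Proof.
  intros H1 H2 x Hx. unfold op_add.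
  replace (vsub (fun n => Cplus (X x n) (Y x n)) (fun n => Cplus (X' x n) (Y' x n)))
    with (fun n => Cplus (vsub (X x) (X' x) n) (vsub (Y x) (Y' x) n)).
  rewrite Rmult_plus_distr_r. apply norm_le_add; auto.
  apply functional_extensionality; intros n. unfold vsub, Cminus. cring.
Qed.

Lemma op_close_scal c X X' e : op_close X X' e -> op_close (op_scal c X) (op_scal c X') (Cmod c * e).
Proof.
  intros H x Hx. unfold op_scal.
  replace (vsub (fun n => Cmult c (X x n)) (fun n => Cmult c (X' x n)))
    with (fun n => Cmult c (vsub (X x) (X' x) n)).
  rewrite Rmult_assoc. apply norm_le_scal; auto.
  apply functional_extensionality; intros n. unfold vsub, Cminus. cring.
Qed.

Section Fwd.
Variable a : nat -> C.
Hypothesis hdec : forall n, Cmod (a (S n)) <= Cmod (a n).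
Notation T := (wshift a).
Variable S0 : op.
Hypothesis hS : inAT a S0.

Definition J (X : op) : Prop := inAT a X /\
  forall e, 0 < e -> exists E : pexpr, op_close X (fun x => den a E (S0 x)) e.

Lemma J_S : J S0.
Proof.
  split; auto. intros e He. exists (PPow 0). apply op_close_ext. lra. intros; reflexivity.
Qed.

Lemma J_ideal : closed_ideal a J.
Proof.
  split; [|split; [|split; [|split; [|split]]]].
  - intros X [H _]; auto.
  - split.
    + apply (inAT_ext a (poly_op a (fun _ => (0:C)) 0)). apply inAT_poly.
      intros x _. apply functional_extensionality; intros n. unfold poly_op, op_zero. rewrite csum_O. cring.
    + intros e He. exists (PScal 0 (PPow 0)). apply op_close_ext. lra.
      intros x _. apply functional_extensionality; intros n. simpl. unfold op_zero, op_scal. cring.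
  - intros X Y [HX1 HX2] [HY1 HY2]. split. apply inAT_add; auto.
    intros e He. destruct (HX2 (e/2)) as [E1 H1]. lra. destruct (HY2 (e/2)) as [E2 H2]. lra.
    exists (PAdd E1 E2). replace e with (e/2 + e/2) by field.
    exact (op_close_add _ _ _ _ _ _ H1 H2).
  - intros c X [HX1 HX2]. split. apply inAT_scal; auto.
    intros e He. destruct (HX2 (e / (Cmod c + 1))) as [E1 H1]. apply frac_pos; auto. apply Cmod_ge_0.
    exists (PScal c E1). eapply op_close_mono. exact (op_close_scal c _ _ _ H1).
    pose proof (frac_le (Cmod c) e 1 (Cmod_ge_0 c)). lra.
  - intros A X HA [HX1 HX2]. split; split.
    + apply inAT_comp; auto.
    + intros e He. destruct (inAT_bound a hdec X HX1) as [B [HB0 HB]].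
      destruct (HA (e/2/(B+1))) as [c [d HP]]. apply frac_pos; auto. lra.
      set (K := sum_f_R0 (fun i => Cmod (c i) * Cmod (pr a 0 (S i))) d).
      assert (HK : 0 <= K). { apply cond_pos_sum. intros; apply Rmult_le_pos; apply Cmod_ge_0. }
      destruct (HX2 (e/2/(K+1))) as [E HE]. apply frac_pos; auto. lra.
      exists (PComp (PPoly c d) E). intros x Hx. simpl. unfold op_comp.
      assert (HXx : l2 (X x)) by (apply inAT_l2 with a; auto).
      rewrite (vsub_tri _ (poly_op a c d (X x))).
      rewrite <- (lin_sub _ (poly_additive a c d) (poly_homog a c d)).
      eapply norm_le_mono. apply norm_le_add.
      * apply HP; auto.
      * apply poly_bound; auto.
      * pose proof (hnorm_nonneg x).
        assert (hnorm (X x) <= B * hnorm x) by (apply norm_le_hnorm; auto).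
        assert (e / 2 / (B + 1) * hnorm (X x) <= e / 2 / (B+1) * (B * hnorm x)).
        { apply Rmult_le_compat_l; auto. left; apply frac_pos; auto; lra. }
        pose proof (frac_le B (e/2) (hnorm x) HB0 H ltac:(lra)).
        pose proof (frac_le K (e/2) (hnorm x) HK H ltac:(lra)).
        unfold K in *. nra.
    + apply inAT_comp; auto.
    + intros e He. destruct (inAT_bound a hdec A HA) as [BA [HBA0 HBA]].
      destruct (inAT_bound a hdec S0 hS) as [BS [HBS0 HBS]].
      destruct (HX2 (e/2/(BA+1))) as [E HE]. apply frac_pos; auto. lra.
      destruct (den_bound a hdec E) as [KE [HKE0 HKE]].
      destruct (HA (e/2/(KE * BS + 1))) as [c [d HP]]. apply frac_pos; auto. nra. lra.
      exists (PComp E (PPoly c d)). intros x Hx. simpl. unfold op_comp.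
      assert (HAx : l2 (A x)) by (apply inAT_l2 with a; auto).
      assert (HPx : l2 (poly_op a c d x)) by (apply inAT_l2 with a; auto; apply inAT_poly).
      rewrite <- (inAT_commP a hdec S0 c d x hS Hx).
      rewrite (vsub_tri _ (den a E (S0 (A x)))).
      rewrite <- (lin_sub _ (den_additive a E) (den_homog a E)).
      rewrite <- (inAT_sub_l2 a S0 _ _ hS HAx HPx).
      eapply norm_le_mono. apply norm_le_add.
      * apply HE; auto.
      * apply HKE. apply HBS. eapply norm_le_l2. apply HP; auto.
      * pose proof (hnorm_nonneg x).
        assert (hnorm (A x) <= BA * hnorm x) by (apply norm_le_hnorm; auto).
        assert (hnorm (vsub (A x) (poly_op a c d x)) <= e/2/(KE*BS+1) * hnorm x) by (apply norm_le_hnorm; auto).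
        assert (e / 2 / (BA + 1) * hnorm (A x) <= e / 2 / (BA+1) * (BA * hnorm x)).
        { apply Rmult_le_compat_l; auto. left; apply frac_pos; auto; lra. }
        assert (KE * (BS * hnorm (vsub (A x) (poly_op a c d x))) <= (KE * BS) * (e/2/(KE*BS+1) * hnorm x)).
        { rewrite <- Rmult_assoc. apply Rmult_le_compat_l; auto. nra. }
        pose proof (frac_le BA (e/2) (hnorm x) HBA0 H ltac:(lra)).
        pose proof (frac_le (KE*BS) (e/2) (hnorm x) ltac:(nra) H ltac:(lra)).
        nra.
  - intros X HX. split.
    + intros e He. destruct (HX (e/2)) as [Y [[HY1 HY2] HXY]]. lra.
      destruct (HY1 (e/2)) as [c [d HP]]. lra. exists c, d.
      replace e with (e/2 + e/2) by field. eapply op_close_tri; eauto.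
    + intros e He. destruct (HX (e/2)) as [Y [[HY1 HY2] HXY]]. lra.
      destruct (HY2 (e/2)) as [E HE]. lra. exists E.
      replace e with (e/2 + e/2) by field. eapply op_close_tri; eauto.
Qed.

End Fwd.

Opaque sum_n.

Lemma CS_finite (p q : nat -> R) N R1 R2 : (forall i, 0 <= p i) -> (forall i, 0 <= q i) ->
  0 <= R1 -> 0 <= R2 ->
  sum_f_R0 (fun i => p i ^ 2) N <= R1 ^ 2 -> sum_f_R0 (fun i => q i ^ 2) N <= R2 ^ 2 ->
  sum_f_R0 (fun i => p i * q i) N <= R1 * R2.
Proof.
  intros Hp Hq H1 H2 HP HQ.
  assert (key : forall t, 0 < t -> sum_f_R0 (fun i => p i * q i) N <= (t * R1^2 + R2^2 / t) / 2).
  { intros t Ht. apply Rle_trans with (sum_f_R0 (fun i => (t * p i ^ 2 + q i ^ 2 / t) / 2) N).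
    - apply sum_Rle. intros i _.
      assert (0 <= (t * p i - q i) ^ 2 / t) by (apply Rdiv_le_0_compat; auto; apply pow2_ge_0).
      assert (E: (t * p i ^ 2 + q i ^ 2 / t) / 2 - p i * q i = (t * p i - q i) ^ 2 / t / 2) by (field; lra).
      lra.
    - rewrite (sum_eq _ (fun i => p i ^ 2 * (t/2) + q i ^ 2 * (/ t / 2))) by (intros; field; lra).
      rewrite plus_sum, !sumR_scal_r.
      assert (0 < / t) by (apply Rinv_0_lt_compat; auto).
      assert (sum_f_R0 (fun i => p i ^ 2) N * (t / 2) <= R1^2 * (t/2)) by (apply Rmult_le_compat_r; lra).
      assert (sum_f_R0 (fun i => q i ^ 2) N * (/ t / 2) <= R2^2 * (/t/2)) by (apply Rmult_le_compat_r; lra).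
      assert (E: (t * R1 ^ 2 + R2 ^ 2 / t) / 2 = R1^2 * (t/2) + R2^2 * (/t/2)) by (field; lra). lra. }
  set (s := sum_f_R0 (fun i => p i * q i) N) in *.
  destruct (Rle_dec s (R1 * R2)) as [Hs|Hs]; auto. exfalso.
  apply Rnot_le_lt in Hs.
  set (dl := Rmin 1 ((s - R1 * R2) / (2 * (R1 + R2 + 2)))).
  assert (Hd0 : 0 < dl). { unfold dl. apply Rmin_glb_lt. lra. apply Rdiv_lt_0_compat; lra. }
  assert (Hd1 : dl <= (s - R1 * R2) / (2 * (R1 + R2 + 2))) by apply Rmin_r.
  assert (Hd2 : dl <= 1) by apply Rmin_l.
  specialize (key ((R2 + dl) / (R1 + dl))). 
  assert (0 < (R2 + dl) / (R1 + dl)) by (apply Rdiv_lt_0_compat; lra).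
  specialize (key H).
  assert (E : ((R2 + dl) / (R1 + dl) * R1 ^ 2 + R2 ^ 2 / ((R2 + dl) / (R1 + dl))) / 2 <= (R1 + dl) * (R2 + dl)).
  { assert (A1 : (R2 + dl) / (R1 + dl) * R1 ^ 2 <= (R2 + dl) * (R1 + dl)).
    { replace ((R2 + dl) * (R1 + dl)) with ((R2 + dl) / (R1 + dl) * (R1 + dl)^2) by (field; lra).
      apply Rmult_le_compat_l. lra. nra. }
    assert (A2 : R2 ^ 2 / ((R2 + dl) / (R1 + dl)) <= (R2 + dl) * (R1 + dl)).
    { replace (R2 ^ 2 / ((R2 + dl) / (R1 + dl))) with ((R1 + dl) / (R2 + dl) * R2^2) by (field; lra).
      replace ((R2 + dl) * (R1 + dl)) with ((R1 + dl) / (R2 + dl) * (R2 + dl)^2) by (field; lra).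
      apply Rmult_le_compat_l. apply Rlt_le, Rdiv_lt_0_compat; lra. nra. }
    lra. }
  assert (s <= (R1 + dl) * (R2 + dl)) by lra.
  assert ((R1 + dl) * (R2 + dl) = R1 * R2 + dl * (R1 + R2 + dl)) by ring.
  assert (dl * (R1 + R2 + dl) <= dl * (R1 + R2 + 2)) by (apply Rmult_le_compat_l; lra).
  assert (dl * (R1 + R2 + 2) <= (s - R1 * R2) / 2).
  { apply Rle_trans with ((s - R1 * R2) / (2 * (R1 + R2 + 2)) * (R1 + R2 + 2)).
    apply Rmult_le_compat_r; lra. right. field. lra. }
  lra.
Qed.

Lemma csum_sub (f g : nat -> C) d : sum_n (fun i => Cminus (f i) (g i)) d = Cminus (sum_n f d) (sum_n g d).
Proof.
  unfold Cminus. rewrite csum_plus. rewrite (csum_ext (fun i => Copp (g i)) (fun i => Cmult (Copp 1) (g i))).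
  rewrite csum_mult_l. cring. intros; cring.
Qed.

Section Bwd.
Variable a : nat -> C.
Hypothesis hdec : forall n, Cmod (a (S n)) <= Cmod (a n).
Hypothesis ha0 : forall n, a n <> (0:C).
Notation T := (wshift a).

Definition SA := Series (fun n => Cmod (a n) ^ 2).

Lemma basis_as_Tp i : basis i = fun n => Cmult (/ pr a 0 i) (op_pow T i (basis 0) n).
Proof.
  rewrite Tp_e0. apply functional_extensionality; intros n. rewrite Cmult_assoc, Cinv_l, Cmult_1_l. auto.
  apply pr_nz; auto.
Qed.

Lemma trunc_eq (x : vec) N : forall n, (n <= N)%nat -> sum_n (fun i => Cmult (x i) (basis i n)) N = x n.
Proof.
  intros n Hn. rewrite (csum_single _ N n Hn). unfold basis. rewrite Nat.eqb_refl. cring.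
  intros i _ Hi. unfold basis. destruct (Nat.eqb_spec n i). lia. cring.
Qed.

Lemma HS_bound E x r rw : l2 (fun n => a n) -> norm_le x r -> norm_le (den a E (basis 0)) rw ->
  norm_le (T (den a E x)) (sqrt SA * rw * r).
Proof.
  intros Ha Hx Hw. set (Z := den a E).
  assert (Hr : 0 <= r) by (eapply norm_le_nonneg; eauto).
  assert (Hrw : 0 <= rw) by (eapply norm_le_nonneg; eauto).
  split. apply Rmult_le_pos; auto. apply Rmult_le_pos; auto. apply sqrt_pos.
  intros N. set (xN := fun n => sum_n (fun i => Cmult (x i) (basis i n)) N).
  assert (Ecaus : forall n, (n <= N)%nat -> T (Z x) n = T (Z xN) n).
  { intros n Hn. apply (causal_comp _ _ (T_causal a) (den_causal a E) x xN N); auto.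
    intros m Hm. unfold xN. rewrite trunc_eq; auto. }
  assert (Eps : sum_f_R0 (fun n => Cmod (T (Z x) n) ^ 2) N = ps (T (Z xN)) N).
  { apply sum_eq. intros n Hn. rewrite Ecaus; auto. }
  rewrite Eps.
  assert (Elin : T (Z xN) = fun n => sum_n (fun i => Cmult (x i) (T (Z (basis i)) n)) N).
  { unfold xN. unfold Z. rewrite (lin_sum _ (den_additive a E)). rewrite (lin_sum T (T_additive a)).
    apply functional_extensionality; intros n. apply csum_ext. intros i _.
    rewrite den_homog, T_scal. auto. }
  assert (Hterm : forall i, norm_le (fun n => Cmult (x i) (T (Z (basis i)) n))
                          (Cmod (x i) * (Cmod (a i) * rw))).
  { intros i. apply norm_le_scal. rewrite basis_as_Tp. unfold Z. rewrite den_homog, T_scal.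
    rewrite den_commTp. rewrite <- pow_S.
    replace (Cmod (a i) * rw) with (Cmod (/ pr a 0 i) * (Cmod (a i) * Cmod (pr a 0 i) * rw)).
    apply norm_le_scal. apply Tp_bound; auto. apply Rmult_le_pos; apply Cmod_ge_0.
    intros m. apply pr_S_le; auto.
    rewrite Cmod_inv by (apply pr_nz; auto). field. apply Rgt_not_eq. apply Cmod_gt_0. apply pr_nz; auto. }
  pose proof (norm_le_sum _ _ N (fun i _ => Hterm i)) as Hsum0.
  assert (Hsum : norm_le (T (Z xN)) (sum_f_R0 (fun i => Cmod (x i) * (Cmod (a i) * rw)) N)) by (rewrite Elin; exact Hsum0).
  destruct Hsum as [_ Hsum]. specialize (Hsum N). unfold ps. eapply Rle_trans. apply Hsum.
  assert (Hcs : sum_f_R0 (fun i => Cmod (x i) * Cmod (a i)) N <= r * sqrt SA).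
  { apply CS_finite; auto. intros; apply Cmod_ge_0. intros; apply Cmod_ge_0. apply sqrt_pos.
    destruct Hx as [_ Hx]. apply Hx.
    rewrite pow2_sqrt. apply (l2_ps (fun n => a n) Ha N). 
    apply Rle_trans with (ps (fun n => a n) 0). apply ps_nonneg. apply (l2_ps (fun n => a n) Ha 0). }
  assert (E1 : sum_f_R0 (fun i => Cmod (x i) * (Cmod (a i) * rw)) N = sum_f_R0 (fun i => Cmod (x i) * Cmod (a i)) N * rw).
  { rewrite <- sumR_scal_r. apply sum_eq. intros; ring. }
  rewrite E1.
  assert (0 <= sum_f_R0 (fun i => Cmod (x i) * Cmod (a i)) N).
  { apply cond_pos_sum. intros; apply Rmult_le_pos; apply Cmod_ge_0. }
  assert (0 <= sqrt SA) by apply sqrt_pos.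
  apply pow_incr. split. nra.
  replace (sqrt SA * rw * r) with ((r * sqrt SA) * rw) by ring. apply Rmult_le_compat_r; auto.
Qed.

Lemma I_sum I (G : nat -> op) d : closed_ideal a I -> (forall i, (i <= d)%nat -> I (G i)) ->
  I (fun x n => sum_n (fun i => G i x n) d).
Proof.
  intros HI. destruct HI as [_ [_ [Hadd _]]]. induction d; intros H.
  - replace (fun x n => sum_n (fun i => G i x n) 0) with (G 0%nat). apply H; lia.
    apply functional_extensionality; intros x. apply functional_extensionality; intros n. rewrite csum_O. auto.
  - replace (fun x n => sum_n (fun i => G i x n) (S d)) with (op_add (fun x n => sum_n (fun i => G i x n) d) (G (S d))).
    apply Hadd. apply IHd. intros; apply H; lia. apply H; lia.
    apply functional_extensionality; intros x. apply functional_extensionality; intros n. unfold op_add. rewrite csum_S. auto.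
Qed.

Lemma count_le r d : sum_f_R0 (fun i => if Nat.ltb (S i) r then 1 else 0) d <= INR r.
Proof.
  assert (forall d, sum_f_R0 (fun i => if Nat.ltb (S i) r then 1 else 0) d <= INR (Nat.min (S d) r)).
  { induction d0.
    - rewrite sumR_O. destruct (Nat.ltb_spec 1 r). rewrite Nat.min_l by lia. simpl. lra.
      apply pos_INR.
    - rewrite sumR_S. destruct (Nat.ltb_spec (S (S d0)) r).
      + rewrite Nat.min_l by lia. rewrite Nat.min_l in IHd0 by lia. rewrite (S_INR (S d0)). lra.
      + eapply Rle_trans. assert (0 + 0 = 0) by ring. rewrite Rplus_0_r. apply IHd0. apply le_INR. lia. }
  eapply Rle_trans. apply H. apply le_INR. lia.
Qed.

Lemma L1 I r X : closed_ideal a I -> (1 <= r)%nat -> I (op_pow T r) -> inAT a X ->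
  (forall j, (1 <= j)%nat -> (j < r)%nat -> X (basis 0) j = (0:C)) -> I X.
Proof.
  intros HI Hr HIr HX Hz. pose proof HI as HI'.
  destruct HI' as [_ [Hzero [Hadd [Hscal [Hcomp Hclos]]]]].
  apply Hclos. intros e He.
  set (eta := e / (INR r + 1)).
  assert (Heta : 0 < eta) by (apply frac_pos; auto; apply pos_INR).
  destruct (HX eta Heta) as [c [d HP]].
  set (c' := fun i => if Nat.ltb (S i) r then (0:C) else c i).
  exists (poly_op a c' d). split.
  - unfold poly_op. apply (I_sum I (fun i x n => Cmult (c' i) (op_pow T (S i) x n))); auto.
    intros i _. unfold c'. destruct (Nat.ltb_spec (S i) r).
    + replace (fun x n => Cmult 0 (op_pow T (S i) x n)) with op_zero. auto.
      apply functional_extensionality; intros x. apply functional_extensionality; intros n. unfold op_zero. cring.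
    + apply (Hscal (c i) (op_pow T (S i))).
      destruct (Nat.eq_dec (S i) r). rewrite e0. auto.
      replace (op_pow T (S i)) with (op_comp (op_pow T (S i - r)) (op_pow T r)).
      destruct (Hcomp (op_pow T (S i - r)) (op_pow T r)) as [Hc _]. apply inAT_Tp; lia. auto. exact Hc.
      apply functional_extensionality; intros x. unfold op_comp. rewrite Tp_plus. f_equal. lia.
  - intros x Hx. pose proof (hnorm_nonneg x).
    rewrite (vsub_tri _ (poly_op a c d x)).
    apply norm_le_mono with (eta * hnorm x + sum_f_R0 (fun i => if Nat.ltb (S i) r then 1 else 0) d * (eta * hnorm x)).
    apply norm_le_add. apply HP; auto.
    + replace (vsub (poly_op a c d x) (poly_op a c' d x)) with
        (fun n => sum_n (fun i => Cmult (if Nat.ltb (S i) r then c i else 0) (op_pow T (S i) x n)) d).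
      2: { apply functional_extensionality; intros n. unfold vsub, poly_op.
           rewrite <- csum_sub. apply csum_ext. intros i _.
           unfold c'. destruct (Nat.ltb (S i) r); unfold Cminus; cring. }
      rewrite <- sumR_scal_r.
      apply (norm_le_sum (fun i n => Cmult (if Nat.ltb (S i) r then c i else 0) (op_pow T (S i) x n))).
      intros i Hi. destruct (Nat.ltb_spec (S i) r).
      * eapply norm_le_mono. apply norm_le_scal. apply Tp_bound'; auto. apply l2_norm_le; auto.
        rewrite <- Rmult_assoc. rewrite Rmult_1_l. apply Rmult_le_compat_r; auto.
        pose proof (op_close_nonneg_coord _ _ _ (basis 0) (S i) HP (l2_basis 0)).
        rewrite Hz in H1 by lia. 
        assert (EP : poly_op a c d (basis 0) (S i) = Cmult (c i) (pr a 0 (S i))).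
        { unfold poly_op. rewrite (csum_single _ d i Hi). rewrite Tp_e0. unfold basis. rewrite Nat.eqb_refl. cring.
          intros l _ Hl. rewrite Tp_e0. unfold basis. destruct (Nat.eqb_spec (S i) (S l)). lia. cring. }
        rewrite EP in H1. unfold Cminus in H1. rewrite Cplus_0_l, Cmod_opp, Cmod_mult in H1.
        pose proof (hnorm_basis 0). pose proof (Cmod_ge_0 (c i)). pose proof (Cmod_ge_0 (pr a 0 (S i))). nra.
      * replace (fun n => Cmult 0 (op_pow T (S i) x n)) with (fun _ : nat => (0:C)).
        apply norm_le_zero. lra.
        apply functional_extensionality; intros n. cring.
    + pose proof (count_le r d).
      assert (sum_f_R0 (fun i => if Nat.ltb (S i) r then 1 else 0) d * (eta * hnorm x) <= INR r * (eta * hnorm x)).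
      { apply Rmult_le_compat_r; auto. apply Rmult_le_pos; lra. }
      assert (eta * hnorm x + INR r * (eta * hnorm x) = e * hnorm x).
      { unfold eta. field. pose proof (pos_INR r). lra. }
      lra.
Qed.

End Bwd.

Opaque sum_n.

Fixpoint psum (F : nat -> pexpr) (d : nat) : pexpr :=
  match d with O => F O | S d' => PAdd (psum F d') (F (S d')) end.

Lemma den_psum a F d v : den a (psum F d) v = fun n => sum_n (fun m => den a (F m) v n) d.
Proof.
  induction d; apply functional_extensionality; intros n.
  - rewrite csum_O. reflexivity.
  - rewrite csum_S. simpl psum. simpl den. unfold op_add. rewrite IHd. reflexivity.
Qed.

Lemma basis_self k : basis k k = (1:C).
Proof. unfold basis. rewrite Nat.eqb_refl. auto. Qed.
Lemma basis_ne k j : j <> k -> basis k j = (0:C).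
Proof. intros H. unfold basis. destruct (Nat.eqb_spec j k). lia. auto. Qed.

Section Final.
Variable a : nat -> C.
Hypothesis hdec : forall n, Cmod (a (S n)) <= Cmod (a n).
Hypothesis ha0 : forall n, a n <> (0:C).
Hypothesis hsum : ex_series (fun n => (Cmod (a n)) ^ 2).
Notation T := (wshift a).

Lemma fwd S0 k : inAT a S0 ->
  (forall X, gen_ideal a S0 X <-> gen_ideal a (op_pow T k) X) -> in_closed_span_orbit a S0 k.
Proof.
  intros hS H. assert (G : gen_ideal a S0 (op_pow T k)) by (apply H; intros I _ HI; auto).
  destruct (G (J a S0) (J_ideal a hdec S0 hS) (J_S a S0 hS)) as [_ HJ].
  intros e He. set (b := pr a 0 k). assert (Hb : b <> (0:C)) by (apply pr_nz; auto).
  assert (Hb' : 0 < Cmod b) by (apply Cmod_gt_0; auto).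
  destruct (HJ (e * Cmod b)) as [E HE]. nra.
  specialize (HE (basis 0) (l2_basis 0)).
  destruct (FS_den a (S0 (basis 0)) E (S0 (basis 0)) (FS_base a _)) as [c [d Ec]].
  exists (fun m => Cmult (/ b) (c m)), d.
  replace (vsub (basis k) (fun n => sum_n (fun m => Cmult (Cmult (/ b) (c m)) (op_pow T m (S0 (basis 0)) n)) d))
    with (fun n => Cmult (/ b) (vsub (op_pow T k (basis 0)) (den a E (S0 (basis 0))) n)).
  - eapply norm_le_mono. apply norm_le_scal. apply HE. rewrite Cmod_inv by auto.
    pose proof (hnorm_basis 0). pose proof (hnorm_nonneg (basis 0)).
    replace (/ Cmod b * (e * Cmod b * hnorm (basis 0))) with (e * hnorm (basis 0)) by (field; lra). nra.
  - apply functional_extensionality; intros n. rewrite Ec, Tp_e0. unfold vsub.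
    rewrite (csum_ext (fun m => Cmult (Cmult (/ b) (c m)) (op_pow T m (S0 (basis 0)) n)) (fun m => Cmult (/ b) (Cmult (c m) (op_pow T m (S0 (basis 0)) n)))).
    rewrite csum_mult_l. fold b. unfold Cminus. toC. field. auto.
    intros. cring.
Qed.

Lemma Tk1 S0 k I : closed_ideal a I -> I S0 -> inAT a S0 -> in_closed_span_orbit a S0 k ->
  I (op_pow T (S k)).
Proof.
  intros HI HIS hS Hspan. pose proof HI as HI'.
  destruct HI' as [_ [_ [Hadd [Hscal [Hcomp Hclos]]]]].
  apply Hclos. intros e He.
  set (b := pr a 0 k). assert (Hb : b <> (0:C)) by (apply pr_nz; auto).
  set (A := sqrt (SA a)). assert (HA : 0 <= A) by apply sqrt_pos.
  assert (Hcb : 0 <= Cmod b) by apply Cmod_ge_0.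
  set (dl := e / 2 / (A * Cmod b + 1)).
  assert (Hdl : 0 < dl) by (apply frac_pos; nra).
  destruct (Hspan dl Hdl) as [c [d Hcd]].
  set (Kc := sum_f_R0 (fun m => Cmod (c m) * Cmod (pr a 0 m)) d).
  assert (HKc : 0 <= Kc). { apply cond_pos_sum. intros; apply Rmult_le_pos; apply Cmod_ge_0. }
  set (p1 := Cmod (pr a 0 1)). assert (Hp1 : 0 <= p1) by apply Cmod_ge_0.
  set (M := A * Cmod b * Kc + p1 * Cmod b * Kc).
  assert (HM : 0 <= M) by (unfold M; apply Rplus_le_le_0_compat; repeat apply Rmult_le_pos; auto).
  set (eta := e / 2 / (M + 1)).
  assert (Heta : 0 < eta) by (apply frac_pos; auto; lra).
  destruct (hS eta Heta) as [cp [dp HP]].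
  set (P := poly_op a cp dp).
  set (W := fun x n => sum_n (fun m => Cmult (c m) (op_pow T m (S0 x) n)) d).
  exists (op_scal b (op_comp T W)). split.
  - apply Hscal.
    assert (IW : I W).
    { unfold W. apply (I_sum a I (fun m x n => Cmult (c m) (op_pow T m (S0 x) n))); auto.
      intros m _. change (I (op_scal (c m) (op_comp (op_pow T m) S0))). apply Hscal.
      destruct m. exact HIS.
      destruct (Hcomp (op_pow T (S m)) S0) as [Hc _]. apply inAT_Tp; lia. auto. exact Hc. }
    destruct (Hcomp (op_pow T 1) W) as [Hc _]. apply inAT_Tp; lia. auto. exact Hc.
  - intros x Hx.
    set (E := PAdd (PPow k) (PScal (Copp b) (psum (fun m => PScal (c m) (PComp (PPow m) (PPoly cp dp))) d))).
    assert (EZ : forall v, den a E v = fun n => Cplus (op_pow T k v n)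
                 (Cmult (Copp b) (sum_n (fun m => Cmult (c m) (op_pow T m (P v) n)) d))).
    { intros v. unfold E. simpl den. unfold op_add, op_scal. rewrite den_psum. reflexivity. }
    set (D := fun n => Cmult b (sum_n (fun m => Cmult (c m) (op_pow T m (vsub (P x) (S0 x)) n)) d)).
    assert (Claim1 : vsub (op_pow T (S k) x) (op_scal b (op_comp T W) x) = fun n => Cplus (T (den a E x) n) (T D n)).
    { rewrite <- T_add. rewrite pow_S. unfold op_scal, op_comp. rewrite <- T_scal.
      rewrite <- (lin_sub T (T_additive a) (T_homog a)). f_equal.
      apply functional_extensionality; intros n. rewrite EZ. unfold D, W, vsub.
      rewrite (csum_ext (fun m => Cmult (c m) (op_pow T m (fun n0 => Cminus (P x n0) (S0 x n0)) n))
         (fun m => Cminus (Cmult (c m) (op_pow T m (P x) n)) (Cmult (c m) (op_pow T m (S0 x) n)))).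
      rewrite csum_sub. unfold Cminus. cring.
      intros m _. change (fun n0 => Cminus (P x n0) (S0 x n0)) with (vsub (P x) (S0 x)).
      rewrite (lin_sub _ (Tp_additive a m) (Tp_homog a m)). unfold vsub, Cminus. cring. }
    rewrite Claim1.
    set (rw := Cmod b * dl + Cmod b * (Kc * eta)).
    assert (HZ0 : norm_le (den a E (basis 0)) rw).
    { replace (den a E (basis 0)) with
        (fun n => Cplus (Cmult b (vsub (basis k) (fun n => sum_n (fun m => Cmult (c m) (op_pow T m (S0 (basis 0)) n)) d) n))
                        (Cmult b (sum_n (fun m => Cmult (c m) (op_pow T m (vsub (S0 (basis 0)) (P (basis 0))) n)) d))).
      - apply norm_le_add. apply norm_le_scal. auto. apply norm_le_scal.
        replace (Kc * eta) with (sum_f_R0 (fun m => Cmod (c m) * (Cmod (pr a 0 m) * eta)) d).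
        apply (norm_le_sum (fun m n => Cmult (c m) (op_pow T m (vsub (S0 (basis 0)) (P (basis 0))) n))).
        intros m _. apply norm_le_scal. apply Tp_bound'; auto. eapply norm_le_mono. apply HP. apply l2_basis.
        pose proof (hnorm_basis 0). nra.
        unfold Kc. rewrite <- sumR_scal_r. apply sum_eq. intros; ring.
      - rewrite EZ. apply functional_extensionality; intros n. rewrite Tp_e0. unfold vsub. fold b.
        rewrite (csum_ext (fun m => Cmult (c m) (op_pow T m (fun n0 => Cminus (S0 (basis 0) n0) (P (basis 0) n0)) n))
         (fun m => Cminus (Cmult (c m) (op_pow T m (S0 (basis 0)) n)) (Cmult (c m) (op_pow T m (P (basis 0)) n)))).
        rewrite csum_sub. unfold Cminus. cring.
        intros m _. change (fun n0 => Cminus (S0 (basis 0) n0) (P (basis 0) n0)) with (vsub (S0 (basis 0)) (P (basis 0))).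
        rewrite (lin_sub _ (Tp_additive a m) (Tp_homog a m)). unfold vsub, Cminus. cring. }
    pose proof (HS_bound a hdec ha0 E x (hnorm x) rw hsum (l2_norm_le x Hx) HZ0) as C2.
    assert (C3 : norm_le (T D) (p1 * (Cmod b * (Kc * (eta * hnorm x))))).
    { apply (Tp_bound' a hdec 1). unfold D. apply norm_le_scal.
      replace (Kc * (eta * hnorm x)) with (sum_f_R0 (fun m => Cmod (c m) * (Cmod (pr a 0 m) * (eta * hnorm x))) d).
      apply (norm_le_sum (fun m n => Cmult (c m) (op_pow T m (vsub (P x) (S0 x)) n))).
      intros m _. apply norm_le_scal. apply Tp_bound'; auto. apply op_close_sym. apply HP. auto.
      unfold Kc. rewrite <- sumR_scal_r. apply sum_eq. intros; ring. }
    eapply norm_le_mono. apply norm_le_add. exact C2. exact C3.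
    fold A. pose proof (hnorm_nonneg x) as Hh. unfold rw.
    assert (X1 : A * Cmod b * dl <= e / 2) by (pose proof (frac_le (A * Cmod b) (e/2) 1 ltac:(nra) ltac:(lra) ltac:(lra)); unfold dl; nra).
    assert (X2 : M * eta <= e / 2) by (pose proof (frac_le M (e/2) 1 HM ltac:(lra) ltac:(lra)); unfold eta; nra).
    assert (EQ : A * (Cmod b * dl + Cmod b * (Kc * eta)) * hnorm x + p1 * (Cmod b * (Kc * (eta * hnorm x)))
       = (A * Cmod b * dl + M * eta) * hnorm x) by (unfold M; ring).
    rewrite EQ. apply Rmult_le_compat_r; auto. lra.
Qed.

Lemma Cdiv_zero (x y : C) : y <> (0:C) -> Cdiv x y = (0:C) -> x = (0:C).
Proof. intros Hy H. replace x with (Cmult (Cdiv x y) y) by (field; auto). rewrite H. cring. Qed.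

Lemma main_aux S0 k (hS : inAT a S0) (hk : (1 < k)%nat)
  (hz : forall j, (1 <= j)%nat -> (j <= k - 1)%nat -> Shat a S0 j = (0:C))
  (hnz : Shat a S0 k <> (0:C)) :
  (forall X, gen_ideal a S0 X <-> gen_ideal a (op_pow T k) X) <-> in_closed_span_orbit a S0 k.
Proof.
  assert (Hpr : forall j, op_pow T j (basis 0) j = pr a 0 j).
  { intros j. rewrite Tp_e0. unfold basis. rewrite Nat.eqb_refl. cring. }
  assert (Hz : forall j, (1 <= j)%nat -> (j < k)%nat -> S0 (basis 0) j = (0:C)).
  { intros j H1 H2. apply (Cdiv_zero _ (op_pow T j (basis 0) j)). rewrite Hpr. apply pr_nz; auto.
    apply hz; lia. }
  split.
  - apply fwd; auto.
  - intros Hspan.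
    assert (HSk : forall I, closed_ideal a I -> I (op_pow T k) -> I S0).
    { intros I HI HIk. apply (L1 a hdec I k S0); auto. lia. }
    assert (HkS : forall I, closed_ideal a I -> I S0 -> I (op_pow T k)).
    { intros I HI HIS. pose proof (Tk1 S0 k I HI HIS hS Hspan) as HI1.
      pose proof HI as HI'. destruct HI' as [_ [_ [Hadd [Hscal _]]]].
      set (sh := Shat a S0 k).
      set (R := op_add S0 (op_scal (Copp sh) (op_pow T k))).
      assert (IR : I R).
      { apply (L1 a hdec I (S k) R); auto. lia.
        - unfold R. apply inAT_add; auto. apply inAT_scal. apply inAT_Tp. lia.
        - intros j H1 H2. unfold R, op_add, op_scal. rewrite Tp_e0.
          destruct (Nat.eq_dec j k).
          + subst j. rewrite basis_self. unfold sh, Shat. rewrite Hpr.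
            toC. field. apply pr_nz; auto.
          + rewrite Hz by lia. rewrite basis_ne by auto. cring. }
      replace (op_pow T k) with (op_scal (/ sh) (op_add S0 (op_scal (Copp 1) R))).
      apply Hscal. apply Hadd. auto. apply Hscal. auto.
      apply functional_extensionality; intros x. apply functional_extensionality; intros n.
      unfold R, op_scal, op_add. toC. field. auto. }
    intros X. split; intros HX I HI HIx.
    + apply HX; auto. apply HSk; auto.
    + apply HX; auto. apply HkS; auto.
Qed.

End Final.


Theorem mainTheorem12 (a : nat -> C)
  (ha0 : forall n, a n <> 0%C)
  (hdec : forall n, Cmod (a (S n)) <= Cmod (a n))
  (hsum : ex_series (fun n => (Cmod (a n)) ^ 2))
  (S : op) (k : nat)
  (hS : inAT a S) (hk : (1 < k)%nat)
  (hz : forall j, (1 <= j)%nat -> (j <= k - 1)%nat -> Shat a S j = 0%C)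
  (hnz : Shat a S k <> 0%C) :
  (forall X, gen_ideal a S X <-> gen_ideal a (op_pow (wshift a) k) X)
  <-> in_closed_span_orbit a S k.
Proof.
  apply main_aux; auto.
Qed.
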